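(* Let $\alpha = 1-\frac{1}{W_{-1}(-2/e^3)+1}\approx 1.3871$, where $W_{-1}$ is the lower real branch of the Lambert $W$-function. For any $\epsilon>0$ and $\frac12>\delta>0$, for any fully-dynamic bin packing algorithm $\mathcal{A}$ with asymptotic competitive ratio $(\alpha-\epsilon)$ and additive term $o(\epsilon\cdot n^{\delta})$, there exists a fully-dynamic bin packing input with $n$ items on which $\mathcal{A}$ uses recourse at least $\Omega(\epsilon^2\cdot n^{1-\delta})$ under unit movement costs.
   Context: Fully-dynamic bin packing: a sequence of updates, each inserting or deleting an item; each item $i$ has a size $s_i\in[0,1]$ and a movement cost $c_i\ge 0$. At each time $t$ the algorithm must maintain a packing of the current set of items $\mathcal{I}_t$ into unit-capacity bins; $OPT(\mathcal{I}_t)$ is the minimum number of unit bins needed for $\mathcal{I}_t$. Moving item $i$ between bins costs $c_i$. An algorithm has asymptotic competitive ratio $\alpha'$, additive term $\beta$ and (amortized) recourse $\gamma$ if at every time $t$ it uses at most $\alpha'\cdot OPT(\mathcal{I}_t)+\beta$ bins and its total movement cost up to time $t$ is at most $\gamma\sum_{i=1}^t c_i$, where $c_i$ is the cost of the item updated at time $i$. Unit movement costs: $c_i=1$ for all items. *)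

(* Defs.v *)
From Stdlib Require Import Reals List Arith Lia Lra.
Import ListNotations.
Open Scope bool_scope.
Open Scope R_scope.

Definition is_LambertWm1 (x w : R) : Prop := w <= -1 /\ w * exp w = x.

(** The item
    inserted by the update at position [i] (0-based) is identified with [i];
    [Del j] deletes the item inserted at position [j]. *)
Inductive update : Type :=
| Ins (s : R)
| Del (j : nat).

Definition is_ins (u : update) : bool :=
  match u with Ins _ => true | Del _ => false end.

Definition is_del_of (i : nat) (u : update) : bool :=
  match u with Del j => Nat.eqb j i | Ins _ => false end.

Definition activeb (sigma : list update) (p i : nat) : bool :=
  Nat.ltb i p
  && (match nth_error sigma i with Some (Ins _) => true | _ => false end)
  && negb (existsb (is_del_of i) (firstn p sigma)).

Definition active_items (sigma : list update) (p : nat) : list nat :=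
  filter (activeb sigma p) (seq 0 p).

Definition item_size (sigma : list update) (i : nat) : R :=
  match nth_error sigma i with Some (Ins s) => s | _ => 0 end.

Definition valid_input (sigma : list update) : Prop :=
  (forall i s, nth_error sigma i = Some (Ins s) -> 0 <= s <= 1) /\
  (forall p j, nth_error sigma p = Some (Del j) -> activeb sigma p j = true).

Definition num_items (sigma : list update) : nat := length (filter is_ins sigma).

Definition packing := nat -> nat.

Definition load (sigma : list update) (p : nat) (f : packing) (b : nat) : R :=
  fold_right Rplus 0
    (map (item_size sigma) (filter (fun i => Nat.eqb (f i) b) (active_items sigma p))).

Definition feasible (sigma : list update) (p : nat) (f : packing) : Prop :=
  forall b, load sigma p f b <= 1.

Definition bins_used (sigma : list update) (p : nat) (f : packing) : nat :=
  length (nodup Nat.eq_dec (map f (active_items sigma p))).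

Definition packable_in (sigma : list update) (p k : nat) : Prop :=
  exists f : packing, feasible sigma p f /\
    forall i, In i (active_items sigma p) -> (f i < k)%nat.

Definition is_OPT (sigma : list update) (p k : nat) : Prop :=
  packable_in sigma p k /\ forall k', packable_in sigma p k' -> (k <= k')%nat.

(** A deterministic online algorithm: the packing it maintains after a
    prefix of updates is a function of that prefix. *)
Definition algorithm := list update -> packing.

Definition alg_state (A : algorithm) (sigma : list update) (p : nat) : packing :=
  A (firstn p sigma).

Definition competitive (A : algorithm) (ratio : R) (beta : nat -> R) : Prop :=
  forall sigma, valid_input sigma ->
  forall p, (p <= length sigma)%nat ->
    feasible sigma p (alg_state A sigma p) /\
    forall k, is_OPT sigma p k ->
      INR (bins_used sigma p (alg_state A sigma p)) <= ratio * INR k + beta (num_items sigma).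

Definition moves_at (A : algorithm) (sigma : list update) (p : nat) : nat :=
  length (filter (fun i => activeb sigma p i &&
                    negb (Nat.eqb (alg_state A sigma p i) (alg_state A sigma (p - 1) i)))
                 (active_items sigma (p - 1))).

Definition moves (A : algorithm) (sigma : list update) (t : nat) : nat :=
  fold_right Nat.add 0%nat (map (moves_at A sigma) (seq 1 t)).

(** A uses (amortized) recourse at least r on sigma (unit movement costs):
    r is not below the recourse, i.e. at some time t the movement cost so far
    is at least r times the sum of update costs (= t). *)
Definition recourse_at_least (A : algorithm) (sigma : list update) (r : R) : Prop :=
  exists t, (1 <= t <= length sigma)%nat /\ INR (moves A sigma t) >= r * INR t.

Definition little_o (g h : nat -> R) : Prop :=
  forall eta, 0 < eta -> exists N, forall n, (N <= n)%nat -> Rabs (g n) <= eta * Rabs (h n).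

(* Main.v *)
Require Import Defs.
From Stdlib Require Import Reals List Arith Lia Lra Bool Classical ZArith.
Import ListNotations.
Open Scope R_scope.

Definition sumR (l : list R) : R := fold_right Rplus 0 l.

Lemma sumR_app l1 l2 : sumR (l1 ++ l2) = sumR l1 + sumR l2.
Proof. induction l1; simpl; [lra|]. unfold sumR in *; simpl. rewrite IHl1. lra. Qed.

Lemma sumR_map_le {A} (f g : A -> R) (L : list A) :
  (forall x, In x L -> f x <= g x) -> sumR (map f L) <= sumR (map g L).
Proof.
  induction L; simpl; intros H; [lra|].
  unfold sumR in *; simpl.
  assert (f a <= g a) by (apply H; auto).
  assert (fold_right Rplus 0 (map f L) <= fold_right Rplus 0 (map g L)) by (apply IHL; auto).
  lra.
Qed.

Lemma sumR_map_const {A} (c : R) (L : list A) :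
  sumR (map (fun _ => c) L) = INR (length L) * c.
Proof.
  induction L as [|a L IH]; unfold sumR in *; cbn [map fold_right length]; [simpl; lra|].
  rewrite S_INR, IH; lra.
Qed.

Lemma sumR_map_nonneg {A} (f : A -> R) (L : list A) :
  (forall x, In x L -> 0 <= f x) -> 0 <= sumR (map f L).
Proof.
  intros H. apply Rle_trans with (sumR (map (fun _ => 0) L)).
  rewrite sumR_map_const; lra. apply sumR_map_le; auto.
Qed.

Lemma sumR_map_plus {A} (f g : A -> R) (L : list A) :
  sumR (map (fun x => f x + g x) L) = sumR (map f L) + sumR (map g L).
Proof. induction L; unfold sumR in *; simpl; [lra|]. rewrite IHL; lra. Qed.

Lemma sumR_map_scal {A} (c : R) (f : A -> R) (L : list A) :
  sumR (map (fun x => c * f x) L) = c * sumR (map f L).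
Proof. induction L; unfold sumR in *; simpl; [lra|]. rewrite IHL; lra. Qed.

Lemma sumR_filter_le {A} (f : A -> R) (P : A -> bool) (L : list A) :
  (forall x, In x L -> 0 <= f x) -> sumR (map f (filter P L)) <= sumR (map f L).
Proof.
  induction L; simpl; intros H; [unfold sumR; simpl; lra|].
  assert (0 <= f a) by auto.
  assert (sumR (map f (filter P L)) <= sumR (map f L)) by auto.
  destruct (P a); unfold sumR in *; simpl; lra.
Qed.

Lemma sumR_filter_split {A} (f : A -> R) (P : A -> bool) (L : list A) :
  sumR (map f L) = sumR (map f (filter P L)) + sumR (map f (filter (fun x => negb (P x)) L)).
Proof.
  induction L; simpl; [unfold sumR; simpl; lra|].
  destruct (P a); simpl; unfold sumR in *; simpl; rewrite IHL; lra.
Qed.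

Definition act (S : list update) : list nat := active_items S (length S).

Definition DelsBelow (S : list update) : Prop :=
  forall p j, nth_error S p = Some (Del j) -> (j < p)%nat.

Lemma activeb_app S T p i : (p <= length S)%nat -> activeb (S ++ T) p i = activeb S p i.
Proof.
  intros Hp. unfold activeb.
  destruct (Nat.ltb i p) eqn:E; simpl; [|reflexivity].
  apply Nat.ltb_lt in E.
  rewrite nth_error_app1 by lia.
  rewrite firstn_app. replace (p - length S)%nat with 0%nat by lia. simpl.
  rewrite app_nil_r. reflexivity.
Qed.

Lemma active_items_app S T p : (p <= length S)%nat ->
  active_items (S ++ T) p = active_items S p.
Proof.
  intros Hp. unfold active_items. apply filter_ext. intros; apply activeb_app; auto.
Qed.

Lemma active_items_prefix sigma p : (p <= length sigma)%nat ->
  active_items sigma p = act (firstn p sigma).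
Proof.
  intros Hp. unfold act. rewrite firstn_length_le by auto.
  rewrite <- (firstn_skipn p sigma) at 1.
  apply active_items_app. rewrite firstn_length_le; lia.
Qed.

Lemma in_act S i : In i (act S) <-> activeb S (length S) i = true.
Proof.
  unfold act, active_items. rewrite filter_In, in_seq. split; [tauto|].
  intros H; split; auto. unfold activeb in H.
  destruct (Nat.ltb i (length S)) eqn:E; simpl in H; [|discriminate].
  apply Nat.ltb_lt in E. lia.
Qed.

Lemma act_lt S i : In i (act S) -> (i < length S)%nat.
Proof. unfold act, active_items. rewrite filter_In, in_seq. lia. Qed.

Lemma existsb_del_none S i : DelsBelow S -> (length S <= i)%nat ->
  existsb (is_del_of i) S = false.
Proof.
  intros HD Hi. destruct (existsb (is_del_of i) S) eqn:H; [exfalso|reflexivity].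
  apply existsb_exists in H. destruct H as [u [Hu Hd]].
  apply In_nth_error in Hu. destruct Hu as [p Hp].
  destruct u as [x|j]; simpl in Hd; [discriminate|].
  apply Nat.eqb_eq in Hd; subst j.
  assert (p < length S)%nat by (apply nth_error_Some; congruence).
  specialize (HD _ _ Hp). lia.
Qed.

Lemma act_ins S x : DelsBelow S -> act (S ++ [Ins x]) = act S ++ [length S].
Proof.
  intros HD. unfold act at 1, active_items.
  rewrite length_app. simpl. replace (length S + 1)%nat with (Datatypes.S (length S)) by lia.
  rewrite seq_S, filter_app. simpl.
  f_equal.
  - unfold act, active_items. apply filter_ext_in. intros i Hi. apply in_seq in Hi.
    unfold activeb.
    replace (Nat.ltb i (Datatypes.S (length S))) with true by (symmetry; apply Nat.ltb_lt; lia).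
    replace (Nat.ltb i (length S)) with true by (symmetry; apply Nat.ltb_lt; lia).
    cbn [andb]. rewrite nth_error_app1 by lia.
    rewrite firstn_all2 by (rewrite length_app; simpl; lia).
    rewrite firstn_all. rewrite existsb_app. simpl. rewrite orb_false_r. reflexivity.
  - unfold activeb.
    replace (Nat.ltb (length S) (Datatypes.S (length S))) with true by (symmetry; apply Nat.ltb_lt; lia).
    rewrite nth_error_app2 by lia. rewrite Nat.sub_diag. cbn [andb nth_error].
    rewrite firstn_all2 by (rewrite length_app; simpl; lia).
    rewrite existsb_app. rewrite existsb_del_none by (auto; lia). simpl.
    reflexivity.
Qed.

Lemma filter_filter' {A} (f g : A -> bool) l :
  filter f (filter g l) = filter (fun x => g x && f x) l.
Proof. induction l; simpl; auto. destruct (g a); simpl; [destruct (f a)|]; simpl; congruence. Qed.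

Lemma act_del S j : act (S ++ [Del j]) = filter (fun i => negb (Nat.eqb i j)) (act S).
Proof.
  unfold act at 1, active_items.
  rewrite length_app. simpl. replace (length S + 1)%nat with (Datatypes.S (length S)) by lia.
  rewrite seq_S, filter_app. simpl.
  replace (activeb (S ++ [Del j]) (Datatypes.S (length S)) (length S)) with false.
  2:{ unfold activeb. rewrite nth_error_app2 by lia. rewrite Nat.sub_diag. simpl.
      rewrite andb_false_r. reflexivity. }
  rewrite app_nil_r. unfold act, active_items. rewrite filter_filter'.
  apply filter_ext_in. intros i Hi. apply in_seq in Hi.
  unfold activeb.
  replace (Nat.ltb i (Datatypes.S (length S))) with true by (symmetry; apply Nat.ltb_lt; lia).
  replace (Nat.ltb i (length S)) with true by (symmetry; apply Nat.ltb_lt; lia).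
  cbn [andb]. rewrite nth_error_app1 by lia.
  rewrite firstn_all2 by (rewrite length_app; simpl; lia).
  rewrite firstn_all. rewrite existsb_app. cbn [existsb is_del_of].
  rewrite orb_false_r.
  destruct (nth_error S i) as [[x|k]|]; simpl; auto.
  rewrite (Nat.eqb_sym j i). destruct (existsb (is_del_of i) S); simpl; auto.
Qed.

Lemma sumR_delta (U : list nat) (x : nat) (c : R) :
  NoDup U -> In x U -> sumR (map (fun b => if Nat.eqb x b then c else 0) U) = c.
Proof.
  induction U as [|u U IH]; intros HN Hin; [destruct Hin|].
  inversion HN; subst. unfold sumR in *; cbn [map fold_right].
  destruct Hin as [->|Hin].
  - rewrite Nat.eqb_refl.
    replace (fold_right Rplus 0 (map (fun b => if Nat.eqb x b then c else 0) U)) with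
      (fold_right Rplus 0 (map (fun _ => 0) U)).
    + fold (sumR (map (fun _ : nat => 0) U)). rewrite sumR_map_const. lra.
    + f_equal. apply map_ext_in. intros b Hb.
      destruct (Nat.eqb_spec x b); subst; [contradiction|auto].
  - destruct (Nat.eqb_spec x u); [subst; contradiction|]. rewrite IH; auto. lra.
Qed.

Lemma sum_partition (w : nat -> R) (f : nat -> nat) (L U : list nat) :
  NoDup U -> (forall i, In i L -> In (f i) U) ->
  sumR (map w L) = sumR (map (fun b => sumR (map w (filter (fun i => Nat.eqb (f i) b) L))) U).
Proof.
  intros HN. induction L as [|a L IH]; intros HL.
  - simpl. replace (map (fun _ : nat => sumR []) U) with (map (fun _ : nat => 0) U).
    + rewrite sumR_map_const. unfold sumR; simpl; lra.
    + apply map_ext. auto.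
  - transitivity (w a + sumR (map w L)). { unfold sumR; simpl; auto. }
    rewrite IH by (intros; apply HL; simpl; auto).
    transitivity (sumR (map (fun b => (if Nat.eqb (f a) b then w a else 0)
        + sumR (map w (filter (fun i => Nat.eqb (f i) b) L))) U)).
    + rewrite sumR_map_plus. rewrite sumR_delta; auto. apply HL; simpl; auto.
    + f_equal. apply map_ext. intros b. simpl.
      destruct (Nat.eqb (f a) b); unfold sumR; simpl; lra.
Qed.

Lemma sumR_ge_one (w : nat -> R) (L : list nat) (x : nat) :
  (forall i, In i L -> 0 <= w i) -> In x L -> w x <= sumR (map w L).
Proof.
  induction L as [|a L IH]; intros Hn Hx; [destruct Hx|].
  unfold sumR in *; cbn [map fold_right].
  assert (0 <= fold_right Rplus 0 (map w L)).
  { apply (sumR_map_nonneg w L). intros; apply Hn; simpl; auto. }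
  assert (0 <= w a) by (apply Hn; simpl; auto).
  destruct Hx as [<-|Hx]; [lra|].
  assert (w x <= fold_right Rplus 0 (map w L)) by (apply IH; auto; intros; apply Hn; simpl; auto).
  lra.
Qed.

Lemma sumR_ge_two (w : nat -> R) (L : list nat) (x y : nat) :
  NoDup L -> (forall i, In i L -> 0 <= w i) -> In x L -> In y L -> x <> y ->
  w x + w y <= sumR (map w L).
Proof.
  induction L as [|a L IH]; intros HN Hn Hx Hy Hxy; [destruct Hx|].
  inversion HN; subst.
  unfold sumR in *; cbn [map fold_right].
  assert (0 <= fold_right Rplus 0 (map w L)).
  { apply (sumR_map_nonneg w L). intros; apply Hn; simpl; auto. }
  assert (0 <= w a) by (apply Hn; simpl; auto).
  destruct Hx as [<-|Hx]; destruct Hy as [<-|Hy].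
  - congruence.
  - assert (w y <= sumR (map w L)) by (apply sumR_ge_one; auto; intros; apply Hn; simpl; auto).
    unfold sumR in *; lra.
  - assert (w x <= sumR (map w L)) by (apply sumR_ge_one; auto; intros; apply Hn; simpl; auto).
    unfold sumR in *; lra.
  - assert (w x + w y <= fold_right Rplus 0 (map w L)) by (apply IH; auto; intros; apply Hn; simpl; auto).
    lra.
Qed.

Lemma sumR_le_count (w : nat -> R) (L : list nat) (M : R) :
  (forall i, In i L -> w i <= M) -> sumR (map w L) <= INR (length L) * M.
Proof.
  intros H. rewrite <- sumR_map_const with (L := L). apply sumR_map_le; auto.
Qed.

Lemma sumR_ge_count (w : nat -> R) (L : list nat) (M : R) :
  (forall i, In i L -> M <= w i) -> INR (length L) * M <= sumR (map w L).
Proof.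
  intros H. rewrite <- sumR_map_const with (L := L). apply sumR_map_le; auto.
Qed.

Lemma sumR_const_eq (w : nat -> R) (L : list nat) (M : R) :
  (forall i, In i L -> w i = M) -> sumR (map w L) = INR (length L) * M.
Proof.
  intros H. rewrite <- sumR_map_const with (L := L). f_equal. apply map_ext_in; auto.
Qed.

Lemma volume_loads sigma p f :
  sumR (map (item_size sigma) (active_items sigma p)) =
  sumR (map (load sigma p f) (nodup Nat.eq_dec (map f (active_items sigma p)))).
Proof.
  apply sum_partition. apply NoDup_nodup.
  intros i Hi. apply nodup_In. apply in_map; auto.
Qed.

Lemma item_size_nonneg sigma i : valid_input sigma -> 0 <= item_size sigma i.
Proof.
  intros [Hs _]. unfold item_size. destruct (nth_error sigma i) as [[x|j]|] eqn:E; try lra.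
  apply (Hs _ _ E).
Qed.

Lemma volume_le_bins sigma p f : feasible sigma p f ->
  sumR (map (item_size sigma) (active_items sigma p)) <= INR (bins_used sigma p f).
Proof.
  intros Hf. rewrite (volume_loads sigma p f). unfold bins_used.
  rewrite <- (Rmult_1_r (INR _)). apply sumR_le_count. intros b _. apply Hf.
Qed.

Lemma bins_used_ge sigma p f (Lb : list nat) :
  NoDup Lb -> (forall b, In b Lb -> exists i, In i (active_items sigma p) /\ f i = b) ->
  (length Lb <= bins_used sigma p f)%nat.
Proof.
  intros HN HL. unfold bins_used. apply NoDup_incl_length; auto.
  intros b Hb. destruct (HL b Hb) as [i [Hi <-]]. apply nodup_In. apply in_map; auto.
Qed.

Lemma OPT_exists sigma p K : packable_in sigma p K ->
  exists k, (k <= K)%nat /\ is_OPT sigma p k.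
Proof.
  induction K as [K IH] using (well_founded_induction lt_wf). intros HK.
  destruct (classic (exists k', (k' < K)%nat /\ packable_in sigma p k')) as [[k' [Hk' Hp]]|Hno].
  - destruct (IH k' Hk' Hp) as [k [Hk Ho]]. exists k; split; auto; lia.
  - exists K; split; auto. split; auto. intros k' Hk'.
    destruct (le_lt_dec K k'); auto. exfalso; apply Hno; eauto.
Qed.

Lemma comp_bound A ratio beta sigma p K :
  competitive A ratio beta -> valid_input sigma -> (p <= length sigma)%nat ->
  packable_in sigma p K ->
  INR (bins_used sigma p (alg_state A sigma p)) <= Rmax ratio 0 * INR K + beta (num_items sigma).
Proof.
  intros Hc Hv Hp HK. destruct (OPT_exists _ _ _ HK) as [k [Hk Ho]].
  destruct (Hc sigma Hv p Hp) as [_ Hb]. specialize (Hb k Ho).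
  apply le_INR in Hk. assert (0 <= INR k) by apply pos_INR.
  unfold Rmax; destruct (Rle_dec ratio 0).
  - assert (ratio * INR k <= 0) by nra. lra.
  - assert (ratio * INR k <= ratio * INR K) by nra. lra.
Qed.

Definition sumN (l : list nat) : nat := fold_right Nat.add 0%nat l.

Lemma sumN_app l1 l2 : sumN (l1 ++ l2) = (sumN l1 + sumN l2)%nat.
Proof. induction l1; simpl; auto. unfold sumN in *; simpl. rewrite IHl1. lia. Qed.

Lemma moves_split A sigma t d :
  moves A sigma (t + d) = (moves A sigma t + sumN (map (moves_at A sigma) (seq (S t) d)))%nat.
Proof.
  unfold moves. rewrite seq_app, map_app.
  change (sumN (map (moves_at A sigma) (seq 1 t) ++ map (moves_at A sigma) (seq (1 + t) d)) =
    (sumN (map (moves_at A sigma) (seq 1 t)) + sumN (map (moves_at A sigma) (seq (S t) d)))%nat).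
  rewrite sumN_app. reflexivity.
Qed.

Lemma filter_length_or {A} (P Q R : A -> bool) L :
  (forall x, In x L -> P x = true -> Q x = true \/ R x = true) ->
  (length (filter P L) <= length (filter Q L) + length (filter R L))%nat.
Proof.
  induction L as [|a L IH]; intros H; simpl; auto.
  assert (IH' := IH (fun x Hx => H x (or_intror Hx))).
  destruct (P a) eqn:EP.
  - destruct (H a (or_introl eq_refl) EP) as [E|E]; rewrite E; simpl;
      [destruct (R a)|destruct (Q a)]; simpl; lia.
  - destruct (Q a); destruct (R a); simpl; lia.
Qed.

Lemma moves_at_ge A sigma p (SM : list nat) :
  NoDup SM ->
  (forall i, In i SM -> In i (active_items sigma (p - 1)) /\ activeb sigma p i = true) ->
  (length (filter (fun i => negb (Nat.eqb (alg_state A sigma p i) (alg_state A sigma (p - 1) i))) SM)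
     <= moves_at A sigma p)%nat.
Proof.
  intros HN HS. unfold moves_at. apply NoDup_incl_length.
  - apply NoDup_filter; auto.
  - intros i Hi. apply filter_In in Hi. destruct Hi as [Hi Hc].
    destruct (HS i Hi) as [Ha Hb]. apply filter_In. split; auto. rewrite Hb, Hc; auto.
Qed.

Lemma changed_le A sigma p0 d (SM : list nat) :
  NoDup SM ->
  (forall p, (p0 < p <= p0 + d)%nat -> forall i, In i SM ->
      In i (active_items sigma (p - 1)) /\ activeb sigma p i = true) ->
  (length (filter (fun i => negb (Nat.eqb (alg_state A sigma (p0 + d) i) (alg_state A sigma p0 i))) SM)
     <= sumN (map (moves_at A sigma) (seq (S p0) d)))%nat.
Proof.
  intros HN. induction d as [|d IH]; intros HS.
  - simpl. replace (p0 + 0)%nat with p0 by lia.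
    rewrite (filter_ext_in _ (fun _ => false)). { clear. induction SM; simpl; auto. }
    intros i _. rewrite Nat.eqb_refl. reflexivity.
  - rewrite seq_S, map_app, sumN_app. simpl.
    assert (IH' := IH (fun p Hp => HS p ltac:(lia))).
    assert (HM := moves_at_ge A sigma (S (p0 + d)) SM HN (HS (S (p0 + d)) ltac:(lia))).
    replace (S (p0 + d) - 1)%nat with (p0 + d)%nat in HM by lia.
    replace (p0 + S d)%nat with (S (p0 + d)) by lia.
    replace (S p0 + d)%nat with (S (p0 + d)) by lia.
    eapply Nat.le_trans; [apply filter_length_or with
      (Q := fun i => negb (Nat.eqb (alg_state A sigma (p0 + d) i) (alg_state A sigma p0 i)))
      (R := fun i => negb (Nat.eqb (alg_state A sigma (S (p0 + d)) i) (alg_state A sigma (p0 + d) i)))|].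
    + intros i _ H. apply negb_true_iff, Nat.eqb_neq in H.
      destruct (Nat.eqb_spec (alg_state A sigma (p0 + d) i) (alg_state A sigma p0 i)).
      * right. apply negb_true_iff, Nat.eqb_neq. congruence.
      * left. reflexivity.
    + lia.
Qed.

Lemma ln_le_mono x y : 0 < x -> x <= y -> ln x <= ln y.
Proof. intros Hx Hxy. destruct (Rle_lt_or_eq_dec _ _ Hxy) as [H|H]; [left; apply ln_increasing; auto|subst; lra]. Qed.

Lemma ln_le_xm1 x : 0 < x -> ln x <= x - 1.
Proof. intros Hx. pose proof (exp_ineq1_le (ln x)). rewrite exp_ln in H; lra. Qed.

Lemma ln_div x y : 0 < x -> 0 < y -> ln (x / y) = ln x - ln y.
Proof. intros. unfold Rdiv. rewrite ln_mult, ln_Rinv; try lra. apply Rinv_0_lt_compat; auto. Qed.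

Lemma exp1_gt2 : 2 < exp 1.
Proof. pose proof (exp_ineq1 1 ltac:(lra)). lra. Qed.

Lemma astar_facts w : is_LambertWm1 (- 2 / exp 3) w ->
  0 < -1 / (w + 1) < 1 /\ ln ((1 + -1 / (w + 1)) / (2 * (-1 / (w + 1)))) = 1 / (-1 / (w + 1)) - 2.
Proof.
  intros [Hw Hwe].
  assert (He1 := exp1_gt2).
  assert (E3 : exp 3 = exp 2 * exp 1) by (rewrite <- exp_plus; f_equal; lra).
  assert (Hpos2 : 0 < exp 2) by apply exp_pos.
  assert (Hpos1 : 0 < exp 1) by apply exp_pos.
  assert (Hwlt : w < -2).
  { destruct (Rlt_or_le w (-2)) as [H|H]; auto. exfalso.
    assert (Hew : exp (-2) <= exp w).
    { destruct (Rle_lt_or_eq_dec _ _ H) as [H'|H']; [left; apply exp_increasing; auto|subst; lra]. }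
    assert (E2 : exp (-2) = / exp 2) by (rewrite <- exp_Ropp; f_equal; lra). rewrite E2 in Hew.
    assert (Hm : (- w) * exp w = 2 / exp 3) by (unfold Rdiv in *; lra).
    assert (/ exp 2 <= (-w) * exp w).
    { assert (0 < exp w) by apply exp_pos. nra. }
    rewrite Hm, E3 in H0. unfold Rdiv in H0. rewrite Rinv_mult in H0.
    assert (0 < / exp 2) by (apply Rinv_0_lt_compat; auto).
    assert (/ exp 1 < / 2) by (apply Rinv_lt_contravar; lra).
    nra. }
  set (v := - (w + 1)).
  assert (Hv : 1 < v) by (unfold v; lra).
  replace (-1 / (w + 1)) with (1 / v) by (unfold v; field; lra).
  assert (Hm : (- w) * exp w = 2 / exp 3) by (unfold Rdiv in *; lra).
  assert (Hl : ln (- w) + w = ln 2 - 3).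
  { rewrite <- (ln_exp w) at 2. rewrite <- ln_mult by (try apply exp_pos; lra).
    rewrite Hm. rewrite ln_div by (try apply exp_pos; lra). rewrite ln_exp. lra. }
  split.
  - split; [apply Rdiv_lt_0_compat; lra|]. apply (Rmult_lt_reg_r v); [lra|].
    unfold Rdiv. rewrite Rmult_assoc, Rinv_l by lra. lra.
  - replace ((1 + 1 / v) / (2 * (1 / v))) with ((- w) / 2) by (unfold v; field; lra).
    rewrite ln_div by lra. replace (1 / (1 / v)) with v by (field; lra).
    unfold v. lra.
Qed.

Lemma g_bound a a' : 0 < a' <= a -> a < 1 -> ln ((1 + a) / (2 * a)) = 1 / a - 2 ->
  2 * a' + a' * ln ((1 + a') / (2 * a')) <= 1 - (a - a') / 2.
Proof.
  intros [Ha' Haa] Ha1 HL.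
  set (t := (a - a') / ((1 + a) * a')).
  assert (Ht : 0 <= t) by (unfold t; apply Rmult_le_pos; [lra|]; left; apply Rinv_0_lt_compat; nra).
  assert (Heq : (1 + a') / (2 * a') = ((1 + a) / (2 * a)) * (1 + t)).
  { unfold t. field. lra. }
  rewrite Heq, ln_mult; [|apply Rdiv_lt_0_compat; lra|lra].
  rewrite HL.
  assert (Hlt : ln (1 + t) <= t) by (pose proof (ln_le_xm1 (1 + t)); lra).
  assert (a' * ln (1 + t) <= a' * t) by (apply Rmult_le_compat_l; lra).
  assert (Hat : a' * t = (a - a') / (1 + a)) by (unfold t; field; lra).
  assert (Hk : (a - a') / (1 + a) + a' * (1 / a - 2) + 2 * a' <= 1 - (a - a') / 2).
  { assert (E : 1 - (a - a') / 2 - ((a - a') / (1 + a) + a' * (1 / a - 2) + 2 * a') =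
               (a - a') * (1 / (a * (1 + a)) - 1 / 2)) by (field; lra).
    assert (1 / (a * (1 + a)) >= 1 / 2).
    { apply Rle_ge. apply Rmult_le_reg_r with (2 * (a * (1 + a))); [nra|].
      unfold Rdiv. field_simplify; nra. }
    nra. }
  nra.
Qed.

Lemma harmonic j0 d : (2 <= j0)%nat ->
  sumR (map (fun i => 1 / INR i) (seq j0 d)) <= ln (INR (j0 + d - 1)) - ln (INR (j0 - 1)).
Proof.
  intros Hj. induction d as [|d IH].
  - simpl. replace (j0 + 0 - 1)%nat with (j0 - 1)%nat by lia. unfold sumR; simpl; lra.
  - rewrite seq_S, map_app, sumR_app.
    set (x := INR (j0 + d)).
    assert (Hx : 2 <= x) by (unfold x; replace 2 with (INR 2) by (simpl; lra); apply le_INR; lia).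
    assert (E1 : INR (j0 + S d - 1) = x) by (unfold x; f_equal; lia).
    assert (E2 : INR (j0 + d - 1) = x - 1) by (unfold x; rewrite minus_INR by lia; simpl; lra).
    rewrite E2 in IH. rewrite E1.
    unfold sumR at 2; simpl. fold x.
    assert (ln (x - 1) - ln x <= - (1 / x)).
    { rewrite <- ln_div by lra. pose proof (ln_le_xm1 ((x - 1) / x) ltac:(apply Rdiv_lt_0_compat; lra)).
      replace ((x - 1) / x - 1) with (- (1 / x)) in H by (field; lra). auto. }
    lra.
Qed.

Definition Rltb (x y : R) : bool := if Rlt_dec x y then true else false.
Definition ind (x y : R) : R := if Rlt_dec x y then 1 else 0.

Lemma step_bound (l h : R) (a n : nat) : 0 < h ->
  Rmin l (INR (a + n) * h) <= INR a * h + sumR (map (fun j => h * ind (INR j * h) l) (seq a n)).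
Proof.
  intros Hh. induction n as [|n IH].
  - rewrite Nat.add_0_r. simpl. unfold sumR; simpl. pose proof (Rmin_r l (INR a * h)). lra.
  - rewrite seq_S, map_app, sumR_app. unfold sumR at 2; simpl.
    replace (a + S n)%nat with (S (a + n)) by lia. rewrite S_INR.
    rewrite Rmult_plus_distr_r, Rmult_1_l.
    destruct (Rlt_dec (INR (a + n) * h) l) as [Hlt|Hge].
    + assert (ind (INR (a + n) * h) l = 1) by (unfold ind; destruct Rlt_dec; lra).
      assert (Rmin l (INR (a + n) * h) = INR (a + n) * h) by (apply Rmin_right; lra).
      pose proof (Rmin_r l (INR (a + n) * h + h)). rewrite H. lra.
    + assert (ind (INR (a + n) * h) l = 0) by (unfold ind; destruct Rlt_dec; lra).
      assert (Rmin l (INR (a + n) * h) = l) by (apply Rmin_left; lra).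
      pose proof (Rmin_l l (INR (a + n) * h + h)). rewrite H. lra.
Qed.

Lemma pointwise_bound (l h : R) (a n : nat) : 0 < h -> l <= 1 ->
  l <= INR a * h + sumR (map (fun j => h * ind (INR j * h) l) (seq a n))
       + (1 - INR (a + n) * h) * ind (INR (a + n) * h) l.
Proof.
  intros Hh Hl. pose proof (step_bound l h a n Hh).
  unfold ind at 2. destruct (Rlt_dec (INR (a + n) * h) l).
  - rewrite Rmin_right in H by lra. lra.
  - rewrite Rmin_left in H by lra. lra.
Qed.

Lemma sum_exchange {A B} (F : A -> B -> R) (U : list A) (J : list B) :
  sumR (map (fun b => sumR (map (fun j => F b j) J)) U) =
  sumR (map (fun j => sumR (map (fun b => F b j) U)) J).
Proof.
  induction U as [|u U IH].
  - cbn [map]. rewrite (map_ext (fun j : B => sumR (map (fun b => F b j) [])) (fun _ => 0)) by reflexivity. rewrite sumR_map_const. unfold sumR; simpl; lra.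
  - transitivity (sumR (map (fun j => F u j) J) + sumR (map (fun b => sumR (map (fun j => F b j) J)) U)).
    { unfold sumR; simpl; auto. }
    rewrite IH. rewrite <- sumR_map_plus. f_equal.
Qed.

Lemma sum_ind_count (z : R) (l : nat -> R) (U : list nat) :
  sumR (map (fun b => ind z (l b)) U) = INR (length (filter (fun b => Rltb z (l b)) U)).
Proof.
  induction U as [|u U IH]; [unfold sumR; simpl; auto|].
  unfold sumR in *; cbn [map fold_right filter]. rewrite IH. unfold ind, Rltb.
  destruct (Rlt_dec z (l u)); cbn [length]; [rewrite S_INR|]; lra.
Qed.

Definition cnt (U : list nat) (l : nat -> R) (z : R) : R :=
  INR (length (filter (fun b => Rltb z (l b)) U)).

Lemma volume_bound (U : list nat) (l : nat -> R) (h : R) (a n : nat) : 0 < h ->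
  (forall b, In b U -> l b <= 1) ->
  sumR (map l U) <= INR (length U) * (INR a * h) +
     sumR (map (fun j => h * cnt U l (INR j * h)) (seq a n)) +
     (1 - INR (a + n) * h) * cnt U l (INR (a + n) * h).
Proof.
  intros Hh Hl.
  eapply Rle_trans.
  { apply sumR_map_le with (g := fun b => INR a * h + sumR (map (fun j => h * ind (INR j * h) (l b)) (seq a n))
       + (1 - INR (a + n) * h) * ind (INR (a + n) * h) (l b)).
    intros b Hb. apply pointwise_bound; auto. }
  rewrite sumR_map_plus, sumR_map_plus, sumR_map_const.
  rewrite sumR_map_scal, sum_ind_count.
  rewrite (sum_exchange (fun b j => h * ind (INR j * h) (l b))).
  unfold cnt. apply Req_le. f_equal. f_equal. f_equal. apply map_ext. intros j.
  rewrite sumR_map_scal, sum_ind_count. reflexivity.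
Qed.

Lemma volume_contra (U : list nat) (l : nat -> R) (H J j0 : nat) (astar a' V beta E0 : R) (kk : nat -> R) :
  V = sumR (map l U) ->
  (forall b, In b U -> l b <= 1) ->
  INR (length U) <= (1 + a') * V + beta ->
  (forall j, (j0 <= j <= J)%nat -> cnt U l (INR (S j) * (1 / INR H)) <= a' * kk j + beta + E0) ->
  (forall j, (j0 <= j <= J)%nat -> kk j <= V * INR H / INR j + 1) ->
  H = (2 * (J + 1))%nat -> (2 <= j0 <= J)%nat ->
  INR j0 <= INR H * a' / (1 + a') -> INR H * a' / (1 + a') < INR j0 + 1 ->
  0 < a' -> a' <= astar -> astar < 1 -> ln ((1 + astar) / (2 * astar)) = 1 / astar - 2 ->
  4 * (1 + a') <= INR H * a' ->
  14 / INR H <= (astar - a') / 8 ->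
  0 <= beta -> 0 <= V -> 0 <= E0 ->
  a' + 2 * beta + E0 < 3 * V * (astar - a') / 8 -> False.
Proof.
  intros HV Hl HU Hc Hk HH Hj Hj0a Hj0b Ha' Haa Ha1 HL Hu Hh Hb HV0 HE Hfin.
  set (Hr := INR H) in *.
  assert (HJ1 : 1 <= INR J) by (replace 1 with (INR 1) by (simpl; lra); apply le_INR; lia).
  assert (HHr : Hr = 2 * INR J + 2) by (unfold Hr; rewrite HH, mult_INR, plus_INR; simpl; lra).
  assert (HHpos : 0 < Hr) by lra.
  set (h := 1 / Hr).
  assert (Hhpos : 0 < h) by (unfold h; apply Rdiv_lt_0_compat; lra).
  assert (HhH : h * Hr = 1) by (unfold h; field; lra).
  set (n := (J - j0)%nat).
  pose proof (volume_bound U l h (S j0) n Hhpos Hl) as VB.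
  rewrite <- HV in VB.
  replace (S j0 + n)%nat with (S J) in VB by (unfold n; lia).
  set (F := a' + beta + E0).
  assert (HT3 : (1 - INR (S J) * h) * cnt U l (INR (S J) * h) <= a' * V + 4 * a' * V * h + F / 2).
  { assert (E : 1 - INR (S J) * h = 1 / 2) by (unfold h; rewrite S_INR, HHr; field; lra).
    rewrite E.
    assert (C1 := Hc J ltac:(lia)). fold h in C1.
    assert (C2 := Hk J ltac:(lia)). fold Hr in C2.
    assert (a' * kk J <= a' * (V * Hr / INR J + 1)) by (apply Rmult_le_compat_l; lra).
    assert (E2 : V * Hr / INR J = 2 * V + 2 * V / INR J) by (rewrite HHr; field; lra).
    assert (V / INR J <= 4 * V * h).
    { unfold h. rewrite HHr. apply Rmult_le_reg_r with (INR J * (2 * INR J + 2)); [nra|].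
      field_simplify; [|lra|lra]. nra. }
    assert (a' * (V / INR J) <= a' * (4 * V * h)) by (apply Rmult_le_compat_l; lra).
    unfold F. nra. }
  assert (HT2 : sumR (map (fun j => h * cnt U l (INR j * h)) (seq (S j0) n)) <=
                a' * V * sumR (map (fun i => 1 / INR i) (seq j0 n)) + INR n * (h * F)).
  { rewrite <- seq_shift, map_map.
    replace (INR n) with (INR (length (seq j0 n))) by (rewrite length_seq; auto).
    rewrite <- sumR_map_scal, <- sumR_map_const, <- sumR_map_plus.
    apply sumR_map_le. intros i Hi. apply in_seq in Hi.
    assert (C1 := Hc i ltac:(unfold n in Hi; lia)). fold h in C1.
    assert (C2 := Hk i ltac:(unfold n in Hi; lia)). fold Hr in C2.
    assert (Hi2 : 2 <= INR i) by (replace 2 with (INR 2) by (simpl; lra); apply le_INR; lia).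
    assert (a' * kk i <= a' * (V * Hr / INR i + 1)) by (apply Rmult_le_compat_l; lra).
    assert (h * cnt U l (INR (S i) * h) <= h * (a' * (V * Hr / INR i + 1) + beta + E0))
      by (apply Rmult_le_compat_l; lra).
    assert (E : h * (a' * (V * Hr / INR i + 1) + beta + E0) = a' * V * (1 / INR i) + h * F)
      by (unfold F; unfold h; field; lra).
    lra. }
  assert (Hn : INR n * h <= 1 / 2).
  { unfold h. assert (INR n <= INR J) by (apply le_INR; unfold n; lia).
    apply Rmult_le_reg_r with Hr; [lra|]. replace (INR n * (1 / Hr) * Hr) with (INR n) by (field; lra). lra. }
  assert (HnF : INR n * (h * F) <= F / 2).
  { assert (0 <= F) by (unfold F; lra). rewrite <- Rmult_assoc. nra. }
  assert (HT1 : INR (length U) * (INR (S j0) * h) <= a' * V + (1 + a') * V * h + beta).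
  { rewrite S_INR.
    assert (Hx : (INR j0 + 1) * h <= a' / (1 + a') + h).
    { unfold h. apply Rmult_le_reg_r with Hr; [lra|]. 
      replace ((INR j0 + 1) * (1 / Hr) * Hr) with (INR j0 + 1) by (field; lra).
      replace ((a' / (1 + a') + 1 / Hr) * Hr) with (Hr * a' / (1 + a') + 1) by (field; lra). lra. }
    assert (Hx1 : (INR j0 + 1) * h <= 1).
    { unfold h. apply Rmult_le_reg_r with Hr; [lra|].
      replace ((INR j0 + 1) * (1 / Hr) * Hr) with (INR j0 + 1) by (field; lra).
      assert (INR j0 <= INR J) by (apply le_INR; lia). lra. }
    assert (0 <= (INR j0 + 1) * h) by (apply Rmult_le_pos; [pose proof (pos_INR j0)|]; lra).
    assert (INR (length U) * ((INR j0 + 1) * h) <= ((1 + a') * V + beta) * ((INR j0 + 1) * h))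
      by (apply Rmult_le_compat_r; lra).
    assert (((1 + a') * V) * ((INR j0 + 1) * h) <= ((1 + a') * V) * (a' / (1 + a') + h))
      by (apply Rmult_le_compat_l; nra).
    assert (E : ((1 + a') * V) * (a' / (1 + a') + h) = a' * V + (1 + a') * V * h) by (field; lra).
    nra. }
  assert (HS : sumR (map (fun i => 1 / INR i) (seq j0 n)) <= ln ((1 + a') / (2 * a')) + 4 * (1 + a') / (Hr * a')).
  { eapply Rle_trans; [apply harmonic; lia|].
    replace (j0 + n - 1)%nat with (J - 1)%nat by (unfold n; lia).
    set (D := Hr * a' / (1 + a') - 2).
    assert (HD4 : 4 <= Hr * a' / (1 + a')).
    { apply Rmult_le_reg_r with (1 + a'); [lra|].
      replace (Hr * a' / (1 + a') * (1 + a')) with (Hr * a') by (field; lra). lra. }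
    assert (HD : 2 <= D) by (unfold D; lra).
    assert (Hj1 : D <= INR (j0 - 1)) by (rewrite minus_INR by lia; simpl; unfold D; lra).
    assert (HJm : INR (J - 1) <= Hr / 2) by (rewrite minus_INR by lia; simpl; lra).
    assert (HJm0 : 0 < INR (J - 1)).
    { apply lt_0_INR. lia. }
    assert (ln (INR (J - 1)) <= ln (Hr / 2)) by (apply ln_le_mono; lra).
    assert (ln D <= ln (INR (j0 - 1))) by (apply ln_le_mono; lra).
    set (u := 2 * (1 + a') / (Hr * a')).
    assert (Hu1 : u <= 1 / 2).
    { unfold u. apply Rmult_le_reg_r with (Hr * a'); [nra|].
      unfold Rdiv. rewrite Rmult_assoc, Rinv_l by nra. lra. }
    assert (Hu0 : 0 < u) by (unfold u; apply Rdiv_lt_0_compat; nra).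
    assert (ED : Hr / 2 / D = (1 + a') / (2 * a') * (1 / (1 - u))).
    { assert (Hz1 : 1 - u <> 0) by lra. assert (Hz2 : D <> 0) by lra.
      assert (Hz3 : a' <> 0) by lra. assert (Hz4 : 1 + a' <> 0) by lra. assert (Hz5 : Hr <> 0) by lra.
      replace (1 - u) with (D * (1 + a') / (Hr * a')).
      { field. repeat split; auto. }
      unfold D, u. field. split; auto. }
    assert (ln (Hr / 2) - ln D = ln ((1 + a') / (2 * a')) + ln (1 / (1 - u))).
    { rewrite <- ln_div by lra. rewrite ED. apply ln_mult; [apply Rdiv_lt_0_compat; lra|].
      apply Rdiv_lt_0_compat; lra. }
    assert (ln (1 / (1 - u)) <= 2 * u).
    { pose proof (ln_le_xm1 (1 / (1 - u)) ltac:(apply Rdiv_lt_0_compat; lra)).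
      assert (1 / (1 - u) - 1 <= 2 * u).
      { apply Rmult_le_reg_r with (1 - u); [lra|]. field_simplify; [nra|lra]. }
      lra. }
    assert (2 * u = 4 * (1 + a') / (Hr * a')) by (unfold u; field; nra).
    lra. }
  assert (HS2 : a' * V * sumR (map (fun i => 1 / INR i) (seq j0 n)) <=
                a' * V * ln ((1 + a') / (2 * a')) + 4 * (1 + a') * V * h).
  { assert (0 <= a' * V) by nra.
    assert (a' * V * sumR (map (fun i => 1 / INR i) (seq j0 n)) <=
            a' * V * (ln ((1 + a') / (2 * a')) + 4 * (1 + a') / (Hr * a'))) by (apply Rmult_le_compat_l; lra).
    assert (E : a' * V * (4 * (1 + a') / (Hr * a')) = 4 * (1 + a') * V * h) by (unfold h; field; nra).
    nra. }
  pose proof (g_bound astar a' ltac:(lra) Ha1 HL) as G.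
  assert (HG : V * (2 * a' + a' * ln ((1 + a') / (2 * a'))) <= V * (1 - (astar - a') / 2))
    by (apply Rmult_le_compat_l; lra).
  assert (Hh14 : (5 + 9 * a') * V * h <= V * (astar - a') / 8).
  { assert (H14 : 14 * h <= (astar - a') / 8) by (unfold h; unfold Rdiv in *; lra).
    assert (0 <= V * h) by (apply Rmult_le_pos; lra).
    assert ((5 + 9 * a') * (V * h) <= 14 * (V * h)) by (apply Rmult_le_compat_r; lra).
    assert (V * (14 * h) <= V * ((astar - a') / 8)) by (apply Rmult_le_compat_l; lra).
    replace ((5 + 9 * a') * V * h) with ((5 + 9 * a') * (V * h)) by ring.
    replace (V * (astar - a') / 8) with (V * ((astar - a') / 8)) by (unfold Rdiv; ring).
    replace (14 * (V * h)) with (V * (14 * h)) in * by ring. lra. }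
  assert (E1 : V * (2 * a' + a' * ln ((1 + a') / (2 * a'))) = 2 * (a' * V) + a' * V * ln ((1 + a') / (2 * a'))) by ring.
  assert (E2 : (5 + 9 * a') * V * h = (1 + a') * V * h + 4 * (1 + a') * V * h + 4 * a' * V * h) by ring.
  assert (E3 : V * (1 - (astar - a') / 2) = V - 4 * (V * (astar - a') / 8)) by field.
  assert (E4 : 3 * V * (astar - a') / 8 = 3 * (V * (astar - a') / 8)) by field.
  unfold F in *. lra.
Qed.

Lemma valid_dels_below S : valid_input S -> DelsBelow S.
Proof.
  intros [_ Hd] p j Hp. specialize (Hd p j Hp). unfold activeb in Hd.
  destruct (Nat.ltb j p) eqn:E; [apply Nat.ltb_lt in E; auto|discriminate].
Qed.

Lemma valid_nil : valid_input [].
Proof. split; intros i s H; destruct i; discriminate. Qed.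

Lemma valid_snoc S u : valid_input S ->
  (forall x, u = Ins x -> 0 <= x <= 1) ->
  (forall j, u = Del j -> In j (act S)) ->
  valid_input (S ++ [u]).
Proof.
  intros [Hs Hd] Hi Hdl. split.
  - intros i x Hx. destruct (lt_dec i (length S)).
    + rewrite nth_error_app1 in Hx by auto. eauto.
    + rewrite nth_error_app2 in Hx by lia. destruct (i - length S)%nat eqn:E; simpl in Hx.
      * inversion Hx; subst. apply Hi; auto.
      * destruct n0; discriminate.
  - intros p j Hp. destruct (lt_dec p (length S)).
    + rewrite nth_error_app1 in Hp by auto. rewrite activeb_app by lia. eauto.
    + rewrite nth_error_app2 in Hp by lia. destruct (p - length S)%nat eqn:E; simpl in Hp.
      * inversion Hp; subst. assert (p = length S) by lia. subst.
        rewrite activeb_app by lia. apply in_act. apply Hdl; auto.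
      * destruct n0; discriminate.
Qed.

Lemma ins_block S x k : valid_input S -> 0 <= x <= 1 ->
  valid_input (S ++ repeat (Ins x) k) /\ act (S ++ repeat (Ins x) k) = act S ++ seq (length S) k.
Proof.
  intros Hv Hx. induction k as [|k [IHv IHa]].
  - simpl. rewrite !app_nil_r. auto.
  - replace (repeat (Ins x) (Datatypes.S k)) with (repeat (Ins x) k ++ [Ins x])
      by (replace (Datatypes.S k) with (k + 1)%nat by lia; rewrite repeat_app; reflexivity).
    rewrite app_assoc. split.
    + apply valid_snoc; auto. intros ? H; inversion H; subst; auto. intros ? H; discriminate.
    + rewrite act_ins by (apply valid_dels_below; auto). rewrite IHa.
      rewrite length_app, repeat_length, seq_S, app_assoc. reflexivity.
Qed.

Lemma filter_true_all {A} (l : list A) : filter (fun _ => true) l = l.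
Proof. induction l; simpl; congruence. Qed.
Lemma filter_false_all {A} (l : list A) : filter (fun _ => false) l = [].
Proof. induction l; simpl; congruence. Qed.

Definition notin (L : list nat) (i : nat) : bool := negb (existsb (Nat.eqb i) L).

Lemma del_block S L : valid_input S -> NoDup L -> (forall j, In j L -> In j (act S)) ->
  valid_input (S ++ map Del L) /\ act (S ++ map Del L) = filter (notin L) (act S).
Proof.
  revert S. induction L as [|j L IH] using rev_ind; intros S Hv HN HL.
  - simpl. rewrite app_nil_r. split; auto. unfold notin; simpl.
    symmetry; apply filter_true_all.
  - assert (HN' : NoDup L) by (apply NoDup_app_remove_r in HN; auto).
    assert (Hj : ~ In j L).
    { intros Hin. apply NoDup_remove_2 with (l := L) (l' := []) (a := j) . auto.
      apply in_or_app; auto. }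
    destruct (IH S Hv HN' (fun j' H => HL j' ltac:(apply in_or_app; auto))) as [IHv IHa].
    rewrite map_app, app_assoc. simpl.
    assert (Hjin : In j (act (S ++ map Del L))).
    { rewrite IHa. apply filter_In. split. apply HL; apply in_or_app; simpl; auto.
      unfold notin. apply negb_true_iff. apply not_true_iff_false. intros He.
      apply existsb_exists in He. destruct He as [y [Hy Hy']]. apply Nat.eqb_eq in Hy'; subst; auto. }
    split.
    + apply valid_snoc; auto. intros ? H; discriminate. intros ? H; inversion H; subst; auto.
    + rewrite act_del, IHa, filter_filter'. apply filter_ext. intros i.
      unfold notin. rewrite existsb_app. simpl. rewrite orb_false_r, negb_orb. reflexivity.
Qed.

Definition round_list (S : list update) (x : R) (k : nat) : list update :=
  S ++ repeat (Ins x) k ++ map Del (seq (length S) k).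

Lemma round_props S m x k : valid_input S -> act S = seq 0 m -> (m <= length S)%nat -> 0 <= x <= 1 ->
  valid_input (round_list S x k) /\ act (round_list S x k) = seq 0 m /\
  length (round_list S x k) = (length S + 2 * k)%nat.
Proof.
  intros Hv Ha Hm Hx. unfold round_list.
  destruct (ins_block S x k Hv Hx) as [Hv1 Ha1].
  rewrite app_assoc.
  destruct (del_block (S ++ repeat (Ins x) k) (seq (length S) k) Hv1 (seq_NoDup _ _)) as [Hv2 Ha2].
  { intros j Hj. rewrite Ha1. apply in_or_app; auto. }
  split; [auto|split].
  - rewrite Ha2, Ha1, Ha, filter_app.
    rewrite (filter_ext_in (notin (seq (length S) k)) (fun _ => true) (seq 0 m)).
    2:{ intros i Hi. apply in_seq in Hi. unfold notin. apply negb_true_iff. apply not_true_iff_false.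
        intros He. apply existsb_exists in He. destruct He as [y [Hy Hy']].
        apply Nat.eqb_eq in Hy'; subst. apply in_seq in Hy. lia. }
    rewrite (filter_ext_in (notin (seq (length S) k)) (fun _ => false) (seq (length S) k)).
    2:{ intros i Hi. unfold notin. apply negb_false_iff. apply existsb_exists. exists i. split; auto.
        apply Nat.eqb_refl. }
    rewrite filter_true_all, filter_false_all. rewrite app_nil_r. reflexivity.
  - rewrite !length_app, repeat_length, length_map, length_seq. lia.
Qed.

Lemma length_filter_split {A} (P : A -> bool) L :
  length L = (length (filter P L) + length (filter (fun x => negb (P x)) L))%nat.
Proof. induction L; simpl; auto. destruct (P a); simpl; lia. Qed.

Lemma length_filter_split2 {A} (P Q : A -> bool) L :
  length (filter P L) = (length (filter P (filter Q L)) + length (filter P (filter (fun x => negb (Q x)) L)))%nat.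
Proof. induction L; simpl; auto. destruct (Q a); simpl; destruct (P a); simpl; lia. Qed.

Lemma NoDup_map_on {A B} (f : A -> B) L :
  NoDup L -> (forall x y, In x L -> In y L -> f x = f y -> x = y) -> NoDup (map f L).
Proof.
  induction L as [|a L IH]; intros HN Hi; simpl; constructor.
  - inversion HN; subst. intros Hin. apply in_map_iff in Hin. destruct Hin as [y [Hy Hy']].
    assert (y = a) by (apply Hi; simpl; auto). subst; contradiction.
  - inversion HN; subst. apply IH; auto. intros; apply Hi; simpl; auto.
Qed.

Lemma load_eq sigma p f b :
  load sigma p f b = sumR (map (item_size sigma) (filter (fun i => Nat.eqb (f i) b) (active_items sigma p))).
Proof. reflexivity. Qed.

Lemma sumR_ones (L : list nat) : sumR (map (fun _ => 1) L) = INR (length L).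
Proof. rewrite sumR_map_const. lra. Qed.

Lemma round_core (sigma : list update) (p0 k m Q q hq : nat) (f0 f1 : packing) :
  valid_input sigma ->
  active_items sigma p0 = seq 0 m ->
  active_items sigma (p0 + k) = seq 0 m ++ seq p0 k ->
  (m <= p0)%nat ->
  (forall i, (i < m)%nat -> item_size sigma i = 1 / INR Q) ->
  (forall i, (p0 <= i < p0 + k)%nat -> item_size sigma i = 1 - INR q / INR Q) ->
  (0 < Q)%nat -> (2 * q < Q)%nat -> (1 <= hq)%nat ->
  feasible sigma (p0 + k) f1 ->
  INR k + INR (length (filter (fun b => Rltb (INR (q + hq) / INR Q) (load sigma p0 f0 b))
                                (nodup Nat.eq_dec (map f0 (seq 0 m)))))
   <= INR (bins_used sigma (p0 + k) f1) +
      INR (length (filter (fun i => negb (Nat.eqb (f1 i) (f0 i))) (seq 0 m))) / INR hq.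
Proof.
  intros Hv Ha0 Ha1 Hm Hs Hl HQ Hq Hhq Hf.
  set (U0 := nodup Nat.eq_dec (map f0 (seq 0 m))).
  set (z := INR (q + hq) / INR Q).
  set (HB := filter (fun b => Rltb z (load sigma p0 f0 b)) U0).
  set (CH := filter (fun i => negb (Nat.eqb (f1 i) (f0 i))) (seq 0 m)).
  set (act1 := seq 0 m ++ seq p0 k).
  assert (HQr : 0 < INR Q) by (apply lt_0_INR; lia).
  assert (Hqr : 2 * INR q < INR Q) by (replace 2 with (INR 2) by (simpl; lra); rewrite <- mult_INR; apply lt_INR; lia).
  assert (Hhqr : 1 <= INR hq) by (replace 1 with (INR 1) by (simpl; lra); apply le_INR; lia).
  assert (Hnd1 : NoDup act1).
  { unfold act1. apply NoDup_app; try apply seq_NoDup. intros a Ha Hb. apply in_seq in Ha; apply in_seq in Hb. lia. }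
  assert (Hnn : forall i, 0 <= item_size sigma i) by (intros; apply item_size_nonneg; auto).
  assert (F1 : forall b, load sigma p0 f0 b = INR (length (filter (fun i => Nat.eqb (f0 i) b) (seq 0 m))) * (1 / INR Q)).
  { intros b. rewrite load_eq, Ha0. apply sumR_const_eq. intros i Hi. apply filter_In in Hi.
    destruct Hi as [Hi _]. apply in_seq in Hi. apply Hs. lia. }
  assert (L1 : forall b, load sigma (p0 + k) f1 b =
     sumR (map (item_size sigma) (filter (fun i => Nat.eqb (f1 i) b) (seq 0 m))) +
     sumR (map (item_size sigma) (filter (fun i => Nat.eqb (f1 i) b) (seq p0 k)))).
  { intros b. rewrite load_eq, Ha1, filter_app, map_app, sumR_app. reflexivity. }
  assert (F3 : forall i j, In i (seq p0 k) -> In j (seq p0 k) -> f1 i = f1 j -> i = j).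
  { intros i j Hi Hj Hij. destruct (Nat.eq_dec i j) as [|Hne]; auto. exfalso.
    pose proof (Hf (f1 i)) as Hfi. rewrite load_eq, Ha1 in Hfi.
    assert (item_size sigma i + item_size sigma j <=
            sumR (map (item_size sigma) (filter (fun i' => Nat.eqb (f1 i') (f1 i)) act1))).
    { apply sumR_ge_two; [apply NoDup_filter; auto|intros; apply Hnn| | |auto].
      - apply filter_In; split; [unfold act1; apply in_or_app; auto|apply Nat.eqb_refl].
      - apply filter_In; split; [unfold act1; apply in_or_app; auto|rewrite Hij; apply Nat.eqb_refl]. }
    apply in_seq in Hi; apply in_seq in Hj.
    rewrite (Hl i) in H by lia. rewrite (Hl j) in H by lia.
    assert (INR q / INR Q < 1 / 2).
    { apply Rmult_lt_reg_r with (INR Q); [lra|]. unfold Rdiv. rewrite Rmult_assoc, Rinv_l by lra. lra. }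
    fold act1 in Hfi. lra. }
  set (Stay := fun b => filter (fun i => Nat.eqb (f0 i) b) (filter (fun i => Nat.eqb (f1 i) b) (seq 0 m))).
  assert (F2 : forall b i, In i (seq p0 k) -> f1 i = b -> (length (Stay b) <= q)%nat).
  { intros b i Hi Hib. pose proof (Hf b) as Hfb. rewrite L1 in Hfb.
    assert (A1 : sumR (map (item_size sigma) (Stay b)) <=
                 sumR (map (item_size sigma) (filter (fun i => Nat.eqb (f1 i) b) (seq 0 m))))
      by (apply sumR_filter_le; intros; apply Hnn).
    assert (A2 : sumR (map (item_size sigma) (Stay b)) = INR (length (Stay b)) * (1 / INR Q)).
    { apply sumR_const_eq. intros i' Hi'. unfold Stay in Hi'. apply filter_In in Hi'. destruct Hi' as [Hi' _].
      apply filter_In in Hi'. destruct Hi' as [Hi' _]. apply in_seq in Hi'. apply Hs; lia. }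
    assert (A3 : item_size sigma i <= sumR (map (item_size sigma) (filter (fun i => Nat.eqb (f1 i) b) (seq p0 k)))).
    { apply sumR_ge_one; [intros; apply Hnn|]. apply filter_In; split; auto. rewrite Hib; apply Nat.eqb_refl. }
    apply in_seq in Hi. rewrite Hl in A3 by lia.
    assert (INR (length (Stay b)) * (1 / INR Q) <= INR q / INR Q) by lra.
    assert (INR (length (Stay b)) <= INR q).
    { apply Rmult_le_reg_r with (1 / INR Q). apply Rdiv_lt_0_compat; lra.
      replace (INR q * (1 / INR Q)) with (INR q / INR Q) by (field; lra). auto. }
    apply INR_le; auto. }
  set (hostsL := fun b => existsb (fun i => Nat.eqb (f1 i) b) (seq p0 k)).
  set (hasS := fun b => existsb (fun i => Nat.eqb (f1 i) b) (seq 0 m)).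
  set (G := filter (fun b => negb (hostsL b) && hasS b) HB).
  set (Bad := filter (fun b => negb (negb (hostsL b) && hasS b)) HB).
  assert (F4 : (k + length G <= bins_used sigma (p0 + k) f1)%nat).
  { replace k with (length (map f1 (seq p0 k))) at 1 by (rewrite length_map, length_seq; auto).
    rewrite <- length_app. apply bins_used_ge.
    - apply NoDup_app.
      + apply NoDup_map_on; [apply seq_NoDup|]. auto.
      + unfold G, HB, U0. apply NoDup_filter, NoDup_filter, NoDup_nodup.
      + intros b Hb HbG. apply in_map_iff in Hb. destruct Hb as [i [Hib Hi]].
        unfold G in HbG. apply filter_In in HbG. destruct HbG as [_ Hc].
        apply andb_true_iff in Hc. destruct Hc as [Hc _]. apply negb_true_iff in Hc.
        unfold hostsL in Hc. assert (existsb (fun i0 => Nat.eqb (f1 i0) b) (seq p0 k) = true).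
        { apply existsb_exists. exists i. split; auto. apply Nat.eqb_eq; auto. }
        congruence.
    - intros b Hb. apply in_app_or in Hb. destruct Hb as [Hb|Hb].
      + apply in_map_iff in Hb. destruct Hb as [i [Hib Hi]]. exists i. split; auto.
        rewrite Ha1. apply in_or_app; auto.
      + unfold G in Hb. apply filter_In in Hb. destruct Hb as [_ Hc].
        apply andb_true_iff in Hc. destruct Hc as [_ Hc]. unfold hasS in Hc.
        apply existsb_exists in Hc. destruct Hc as [i [Hi Hib]]. apply Nat.eqb_eq in Hib.
        exists i; split; auto. rewrite Ha1. apply in_or_app; auto. }
  set (Out := fun b => filter (fun i => Nat.eqb (f0 i) b) CH).
  assert (F5 : forall b, In b Bad -> INR hq <= INR (length (Out b))).
  { intros b Hb. unfold Bad in Hb. apply filter_In in Hb. destruct Hb as [Hb Hc].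
    unfold HB in Hb. apply filter_In in Hb. destruct Hb as [_ Hz].
    unfold Rltb in Hz. destruct (Rlt_dec z (load sigma p0 f0 b)) as [Hz'|]; [|discriminate].
    rewrite F1 in Hz'. unfold z in Hz'.
    assert (Hin0 : (q + hq < length (filter (fun i => Nat.eqb (f0 i) b) (seq 0 m)))%nat).
    { apply INR_lt. apply Rmult_lt_reg_r with (1 / INR Q). apply Rdiv_lt_0_compat; lra.
      replace (INR (q + hq) * (1 / INR Q)) with (INR (q + hq) / INR Q) by (field; lra). auto. }
    rewrite (length_filter_split2 _ (fun i => Nat.eqb (f1 i) (f0 i))) in Hin0.
    assert (Es : filter (fun i => Nat.eqb (f0 i) b) (filter (fun i => Nat.eqb (f1 i) (f0 i)) (seq 0 m)) = Stay b).
    { unfold Stay. rewrite !filter_filter'. apply filter_ext. intros i.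
      destruct (Nat.eqb_spec (f0 i) b); destruct (Nat.eqb_spec (f1 i) (f0 i)); destruct (Nat.eqb_spec (f1 i) b);
        simpl; auto; subst; try congruence. }
    rewrite Es in Hin0. fold CH in Hin0. fold (Out b) in Hin0.
    apply le_INR.
    apply negb_true_iff in Hc. apply andb_false_iff in Hc. destruct Hc as [Hc|Hc].
    - apply negb_false_iff in Hc. unfold hostsL in Hc. apply existsb_exists in Hc.
      destruct Hc as [i [Hi Hib]]. apply Nat.eqb_eq in Hib.
      pose proof (F2 b i Hi Hib). lia.
    - assert (Stay b = []).
      { destruct (Stay b) as [|i l] eqn:E; auto. exfalso.
        assert (In i (Stay b)) by (rewrite E; simpl; auto).
        unfold Stay in H. apply filter_In in H. destruct H as [H _]. apply filter_In in H.
        destruct H as [Hi Hib]. unfold hasS in Hc.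
        assert (existsb (fun i0 => Nat.eqb (f1 i0) b) (seq 0 m) = true).
        { apply existsb_exists. exists i; auto. }
        congruence. }
      rewrite H in Hin0. simpl in Hin0. lia. }
  assert (F6 : INR (length Bad) * INR hq <= INR (length CH)).
  { eapply Rle_trans. apply sumR_ge_count with (w := fun b => INR (length (Out b))). auto.
    rewrite <- sumR_ones.
    rewrite (sum_partition (fun _ => 1) f0 CH U0).
    2:{ unfold U0; apply NoDup_nodup. }
    2:{ intros i Hi. unfold CH in Hi. apply filter_In in Hi. destruct Hi as [Hi _].
        unfold U0. apply nodup_In. apply in_map; auto. }
    unfold Bad, HB. rewrite filter_filter'.
    eapply Rle_trans; [|apply sumR_filter_le]. 
    - apply Req_le. f_equal. apply map_ext. intros b. rewrite sumR_ones. reflexivity.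
    - intros b _. apply sumR_map_nonneg. intros; lra. }
  assert (F7 : length HB = (length G + length Bad)%nat) by (apply length_filter_split).
  assert (INR (length Bad) <= INR (length CH) / INR hq).
  { apply Rmult_le_reg_r with (INR hq); [lra|].
    replace (INR (length CH) / INR hq * INR hq) with (INR (length CH)) by (field; lra). auto. }
  apply le_INR in F4. rewrite plus_INR in F4. rewrite F7, plus_INR. lra.
Qed.

Lemma count_div (L : list nat) q b : NoDup L -> (0 < q)%nat ->
  (length (filter (fun i => Nat.eqb (i / q) b) L) <= q)%nat.
Proof.
  intros HN Hq. apply Nat.le_trans with (length (seq (b * q) q)); [|rewrite length_seq; lia]. apply NoDup_incl_length.
  - apply NoDup_filter; auto.
  - intros i Hi. apply filter_In in Hi. destruct Hi as [_ Hi]. apply Nat.eqb_eq in Hi.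
    apply in_seq. pose proof (Nat.div_mod i q ltac:(lia)). pose proof (Nat.mod_upper_bound i q ltac:(lia)).
    rewrite Hi in H. nia.
Qed.

Lemma pack_small sigma p m Q V : active_items sigma p = seq 0 m ->
  (forall i, (i < m)%nat -> item_size sigma i = 1 / INR Q) -> (0 < Q)%nat -> (m <= V * Q)%nat ->
  packable_in sigma p V.
Proof.
  intros Ha Hs HQ Hm. exists (fun i : nat => (i / Q)%nat). split.
  - intros b. rewrite load_eq, Ha.
    assert (HQr : 0 < INR Q) by (apply lt_0_INR; lia).
    eapply Rle_trans. apply sumR_le_count with (M := 1 / INR Q).
    { intros i Hi. apply filter_In in Hi. destruct Hi as [Hi _]. apply in_seq in Hi. rewrite Hs by lia. lra. }
    assert (INR (length (filter (fun i => Nat.eqb (i / Q) b) (seq 0 m))) <= INR Q)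
      by (apply le_INR, count_div; auto; apply seq_NoDup).
    apply Rmult_le_reg_r with (INR Q); [lra|].
    replace (INR (length (filter (fun i : nat => Nat.eqb (i / Q) b) (seq 0 m))) * (1 / INR Q) * INR Q)
      with (INR (length (filter (fun i : nat => Nat.eqb (i / Q) b) (seq 0 m)))) by (field; lra). lra.
  - intros i Hi. rewrite Ha in Hi. apply in_seq in Hi. apply Nat.Div0.div_lt_upper_bound. lia.
Qed.

Lemma pack_round sigma p m Q q k p0 :
  active_items sigma p = seq 0 m ++ seq p0 k ->
  (forall i, (i < m)%nat -> item_size sigma i = 1 / INR Q) ->
  (forall i, (p0 <= i < p0 + k)%nat -> item_size sigma i = 1 - INR q / INR Q) ->
  (m <= p0)%nat -> (0 < q)%nat -> (q <= Q)%nat -> (m <= k * q)%nat ->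
  packable_in sigma p k.
Proof.
  intros Ha Hs Hl Hm Hq HqQ Hmk.
  assert (HQr : 0 < INR Q) by (apply lt_0_INR; lia).
  assert (HqQr : INR q <= INR Q) by (apply le_INR; auto).
  exists (fun i : nat => if Nat.ltb i m then (i / q)%nat else (i - p0)%nat). split.
  - intros b. rewrite load_eq, Ha, filter_app, map_app, sumR_app.
    rewrite (filter_ext_in _ (fun i => Nat.eqb (i / q) b) (seq 0 m)).
    2:{ intros i Hi. apply in_seq in Hi. replace (Nat.ltb i m) with true by (symmetry; apply Nat.ltb_lt; lia). auto. }
    rewrite (filter_ext_in _ (fun i => Nat.eqb (i - p0) b) (seq p0 k)).
    2:{ intros i Hi. apply in_seq in Hi. replace (Nat.ltb i m) with false by (symmetry; apply Nat.ltb_ge; lia). auto. }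
    assert (A1 : sumR (map (item_size sigma) (filter (fun i => Nat.eqb (i / q) b) (seq 0 m))) <= INR q / INR Q).
    { eapply Rle_trans. apply sumR_le_count with (M := 1 / INR Q).
      { intros i Hi. apply filter_In in Hi. destruct Hi as [Hi _]. apply in_seq in Hi. rewrite Hs by lia. lra. }
      assert (INR (length (filter (fun i => Nat.eqb (i / q) b) (seq 0 m))) <= INR q)
        by (apply le_INR, count_div; auto; apply seq_NoDup).
      apply Rmult_le_reg_r with (INR Q); [lra|].
      replace (INR (length (filter (fun i : nat => Nat.eqb (i / q) b) (seq 0 m))) * (1 / INR Q) * INR Q)
        with (INR (length (filter (fun i : nat => Nat.eqb (i / q) b) (seq 0 m)))) by (field; lra).
      replace (INR q / INR Q * INR Q) with (INR q) by (field; lra). lra. }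
    assert (A2 : sumR (map (item_size sigma) (filter (fun i => Nat.eqb (i - p0) b) (seq p0 k))) <= 1 - INR q / INR Q).
    { eapply Rle_trans. apply sumR_le_count with (M := 1 - INR q / INR Q).
      { intros i Hi. apply filter_In in Hi. destruct Hi as [Hi _]. apply in_seq in Hi. rewrite Hl by lia. lra. }
      assert (Hc : (length (filter (fun i => Nat.eqb (i - p0) b) (seq p0 k)) <= 1)%nat).
      { apply Nat.le_trans with (length (seq (p0 + b) 1)); [|rewrite length_seq; lia]. apply NoDup_incl_length.
        - apply NoDup_filter, seq_NoDup.
        - intros i Hi. apply filter_In in Hi. destruct Hi as [Hi Hb]. apply Nat.eqb_eq in Hb.
          apply in_seq in Hi. apply in_seq. lia. }
      apply le_INR in Hc. simpl in Hc.
      assert (0 <= 1 - INR q / INR Q).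
      { assert (INR q / INR Q <= 1). { apply Rmult_le_reg_r with (INR Q); [lra|].
          replace (INR q / INR Q * INR Q) with (INR q) by (field; lra). lra. } lra. }
      nra. }
    lra.
  - intros i Hi. rewrite Ha in Hi. apply in_app_or in Hi. destruct Hi as [Hi|Hi]; apply in_seq in Hi.
    + replace (Nat.ltb i m) with true by (symmetry; apply Nat.ltb_lt; lia).
      apply Nat.Div0.div_lt_upper_bound. lia.
    + replace (Nat.ltb i m) with false by (symmetry; apply Nat.ltb_ge; lia). lia.
Qed.

Lemma load_app S T f b : load (S ++ T) (length S) f b = load S (length S) f b.
Proof.
  unfold load. rewrite active_items_app by lia. f_equal. apply map_ext_in.
  intros i Hi. apply filter_In in Hi. destruct Hi as [Hi _].
  unfold active_items in Hi. apply filter_In in Hi. destruct Hi as [Hi _]. apply in_seq in Hi.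
  unfold item_size. rewrite nth_error_app1 by lia. reflexivity.
Qed.

Lemma ceil_spec x j : (0 < j)%nat ->
  (x <= (x + j - 1) / j * j)%nat /\ ((x + j - 1) / j * j < x + j)%nat.
Proof.
  intros Hj. pose proof (Nat.div_mod (x + j - 1) j ltac:(lia)).
  pose proof (Nat.mod_upper_bound (x + j - 1) j ltac:(lia)).
  set (d := ((x + j - 1) / j)%nat) in *. set (r := ((x + j - 1) mod j)%nat) in *. nia.
Qed.

Lemma firstn_repeat' {X} (x : X) i k : (i <= k)%nat -> firstn i (repeat x k) = repeat x i.
Proof.
  revert k; induction i; intros k Hk; simpl; auto. destruct k; [lia|]. simpl. f_equal. apply IHi. lia.
Qed.

Lemma num_items_app S T : num_items (S ++ T) = (num_items S + num_items T)%nat.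
Proof. unfold num_items. rewrite filter_app, length_app. reflexivity. Qed.

Lemma num_items_repeat x k : num_items (repeat (Ins x) k) = k.
Proof. unfold num_items. induction k; simpl; auto. Qed.

Lemma num_items_dels L : num_items (map Del L) = 0%nat.
Proof. unfold num_items. induction L; simpl; auto. Qed.

Lemma num_items_round S x k : num_items (round_list S x k) = (num_items S + k)%nat.
Proof. unfold round_list. rewrite !num_items_app, num_items_repeat, num_items_dels. lia. Qed.

Section Adv.
Variables (A : algorithm) (beta : nat -> R) (n : nat) (c astar a' : R) (Vn H J j0 hq : nat).

Definition mm : nat := (Vn * H * hq)%nat.
Definition QQ : nat := (H * hq)%nat.
Definition BB : R := Rabs (beta n).
Definition E0 : R := INR Vn * (astar - a') / 8.
Definition kq (j : nat) : nat := ((Vn * H + j - 1) / j)%nat.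
Definition xs (j : nat) : R := 1 - INR (j * hq) / INR QQ.
Definition viol (S : list update) (j : nat) : bool :=
  Rltb (a' * INR (kq j) + BB + E0)
    (INR (length (filter (fun b => Rltb (INR (j * hq + hq) / INR QQ) (load S (length S) (A S) b))
                          (nodup Nat.eq_dec (map (A S) (seq 0 mm)))))).
Definition jsel (S : list update) : nat :=
  match find (viol S) (seq j0 (Datatypes.S J - j0)) with Some j => j | None => j0 end.
Definition step (S : list update) : list update := round_list S (xs (jsel S)) (kq (jsel S)).

Definition Inv (S : list update) : Prop :=
  valid_input S /\ act S = seq 0 mm /\ (mm <= length S)%nat /\
  (forall i, (i < mm)%nat -> nth_error S i = Some (Ins (1 / INR QQ))).

Hypothesis Hcomp : competitive A c beta.
Hypothesis Hc : c <= 1 + a'.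
Hypothesis HH : H = (2 * (J + 1))%nat.
Hypothesis Hj : (2 <= j0 <= J)%nat.
Hypothesis Hj0a : INR j0 <= INR H * a' / (1 + a').
Hypothesis Hj0b : INR H * a' / (1 + a') < INR j0 + 1.
Hypothesis Ha' : 0 < a'.
Hypothesis Haa : a' <= astar.
Hypothesis Ha1 : astar < 1.
Hypothesis HL : ln ((1 + astar) / (2 * astar)) = 1 / astar - 2.
Hypothesis Hu : 4 * (1 + a') <= INR H * a'.
Hypothesis Hh : 14 / INR H <= (astar - a') / 8.
Hypothesis Hhq : (1 <= hq)%nat.
Hypothesis HVn : (1 <= Vn)%nat.
Hypothesis Hfin : a' + 2 * BB + E0 < 3 * INR Vn * (astar - a') / 8.

Lemma jsel_range S : (j0 <= jsel S <= J)%nat.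
Proof.
  unfold jsel. destruct (find (viol S) (seq j0 (Datatypes.S J - j0))) eqn:E; [|lia].
  apply find_some in E. destruct E as [E _]. apply in_seq in E. lia.
Qed.

Lemma QQ_pos : (0 < QQ)%nat.
Proof. unfold QQ. lia. Qed.

Lemma xs_range j : (j <= J)%nat -> 0 <= xs j <= 1.
Proof.
  intros Hjj. unfold xs. pose proof QQ_pos.
  assert (0 < INR QQ) by (apply lt_0_INR; lia).
  assert (INR (j * hq) <= INR QQ) by (apply le_INR; unfold QQ; nia).
  assert (0 <= INR (j * hq)) by apply pos_INR.
  assert (INR (j * hq) / INR QQ <= 1).
  { apply Rmult_le_reg_r with (INR QQ); [lra|]. replace (INR (j * hq) / INR QQ * INR QQ) with (INR (j * hq)) by (field; lra). lra. }
  assert (0 <= INR (j * hq) / INR QQ) by (unfold Rdiv; apply Rmult_le_pos; [lra|left; apply Rinv_0_lt_compat; lra]).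
  lra.
Qed.

Lemma step_inv S : Inv S -> Inv (step S).
Proof.
  intros [Hv [Ha [Hm Hn]]]. pose proof (jsel_range S).
  destruct (round_props S mm (xs (jsel S)) (kq (jsel S)) Hv Ha Hm (xs_range (jsel S) ltac:(lia))) as [Hv' [Hac' Hl']].
  unfold step, Inv. split; [auto|split; [auto|split]].
  - rewrite Hl'. lia.
  - intros i Hi. unfold round_list. rewrite nth_error_app1 by lia. auto.
Qed.

Lemma kq_spec j : (0 < j)%nat -> (Vn * H <= kq j * j)%nat /\ (kq j * j < Vn * H + j)%nat.
Proof. intros. unfold kq. apply ceil_spec; auto. Qed.

Lemma round_moves S T : Inv S ->
  valid_input (step S ++ T) -> num_items (step S ++ T) = n ->
  INR (moves A (step S ++ T) (length S)) + E0 * INR hq < INR (moves A (step S ++ T) (length (step S))).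
Proof.
  intros HI Hv Hn. pose proof HI as [HvS [HaS [HmS HnS]]].
  pose proof (jsel_range S) as Hjr.
  set (sigma := step S ++ T) in *.
  set (j := jsel S) in *. set (k := kq j). set (x := xs j). set (p0 := length S).
  assert (Hsig : sigma = S ++ repeat (Ins x) k ++ (map Del (seq p0 k) ++ T)).
  { unfold sigma, step, round_list. fold j. fold k x p0. rewrite <- !app_assoc. reflexivity. }
  assert (Hx : 0 <= x <= 1) by (apply xs_range; lia).
  assert (Hlen : (p0 + 2 * k <= length sigma)%nat).
  { rewrite Hsig, !length_app, repeat_length, length_map, length_seq. lia. }
  assert (Hfirst : forall i, (i <= k)%nat -> firstn (p0 + i) sigma = S ++ repeat (Ins x) i).
  { intros i Hi. rewrite Hsig, firstn_app. rewrite firstn_all2 by lia. f_equal.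
    replace (p0 + i - length S)%nat with i by (unfold p0; lia).
    rewrite firstn_app, firstn_repeat' by auto. rewrite repeat_length.
    replace (i - k)%nat with 0%nat by lia. simpl. apply app_nil_r. }
  assert (Hact : forall i, (i <= k)%nat -> active_items sigma (p0 + i) = seq 0 mm ++ seq p0 i).
  { intros i Hi. rewrite active_items_prefix by lia. rewrite Hfirst by auto.
    destruct (ins_block S x i HvS Hx) as [_ Ha]. rewrite Ha, HaS. reflexivity. }
  assert (Hact0 : active_items sigma p0 = seq 0 mm).
  { replace p0 with (p0 + 0)%nat by lia. rewrite Hact by lia. simpl. apply app_nil_r. }
  assert (Hs : forall i, (i < mm)%nat -> item_size sigma i = 1 / INR QQ).
  { intros i Hi. unfold item_size. rewrite Hsig, nth_error_app1 by lia. rewrite HnS by auto. reflexivity. }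
  assert (Hl : forall i, (p0 <= i < p0 + k)%nat -> item_size sigma i = x).
  { intros i Hi. unfold item_size. rewrite Hsig, nth_error_app2 by (unfold p0 in *; lia).
    rewrite nth_error_app1 by (rewrite repeat_length; unfold p0 in *; lia).
    rewrite nth_error_repeat by (unfold p0 in *; lia). reflexivity. }
  assert (Hst0 : alg_state A sigma p0 = A S).
  { unfold alg_state. replace p0 with (p0 + 0)%nat by lia. rewrite Hfirst by lia. simpl. rewrite app_nil_r. reflexivity. }
  assert (HQr : 0 < INR QQ) by (apply lt_0_INR; apply QQ_pos).
  assert (Hmax : Rmax c 0 <= 1 + a') by (apply Rmax_lub; lra).
  assert (HBB : Rabs (beta (num_items sigma)) = BB) by (rewrite Hn; reflexivity).
  assert (Hpk0 : packable_in sigma p0 Vn).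
  { apply (pack_small sigma p0 mm QQ Vn); auto. apply QQ_pos. unfold mm, QQ. lia. }
  pose proof (comp_bound A c beta sigma p0 Vn Hcomp Hv ltac:(lia) Hpk0) as Hb0.
  destruct (Hcomp sigma Hv p0 ltac:(lia)) as [Hf0 _].
  rewrite Hst0 in Hb0, Hf0.
  assert (Hb0' : INR (bins_used sigma p0 (A S)) <= (1 + a') * INR Vn + BB).
  { pose proof (Rle_abs (beta (num_items sigma))). pose proof (pos_INR Vn).
    assert (Rmax c 0 * INR Vn <= (1 + a') * INR Vn) by (apply Rmult_le_compat_r; lra). lra. }
  assert (Hload : forall b, load sigma p0 (A S) b = load S (length S) (A S) b).
  { intros b. unfold sigma, step, round_list. rewrite <- app_assoc, <- app_assoc. apply load_app. }
  assert (Hthr : forall j', INR (j' * hq + hq) / INR QQ = INR (Datatypes.S j') * (1 / INR H)).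
  { intros j'. unfold QQ. replace (j' * hq + hq)%nat with (Datatypes.S j' * hq)%nat by lia.
    rewrite !mult_INR. assert (0 < INR hq) by (apply lt_0_INR; lia).
    assert (0 < INR H) by (apply lt_0_INR; lia). field; lra. }
  destruct (find (viol S) (seq j0 (Datatypes.S J - j0))) eqn:Ef.
  2:{ exfalso. pose proof (find_none _ _ Ef) as Hno.
      apply (volume_contra (nodup Nat.eq_dec (map (A S) (seq 0 mm))) (load sigma p0 (A S)) H J j0 astar a'
               (INR Vn) BB E0 (fun j' => INR (kq j'))).
      19: exact Hfin.
      all: try assumption.
      - pose proof (volume_loads sigma p0 (A S)) as VL. rewrite Hact0 in VL. rewrite <- VL.
        rewrite (sumR_const_eq _ _ (1 / INR QQ)).
        + rewrite length_seq. unfold QQ, mm. rewrite !mult_INR.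
          assert (0 < INR hq) by (apply lt_0_INR; lia). assert (0 < INR H) by (apply lt_0_INR; lia). field; lra.
        + intros i Hi. apply in_seq in Hi. apply Hs. lia.
      - intros b _. apply Hf0.
      - unfold bins_used in Hb0'. rewrite Hact0 in Hb0'. auto.
      - intros j' Hj'. assert (Hv' := Hno j' ltac:(apply in_seq; lia)). unfold viol, Rltb in Hv'.
        destruct (Rlt_dec _ _) as [|Hnl] in Hv'; [discriminate|]. apply Rnot_lt_le in Hnl.
        unfold cnt. rewrite <- Hthr.
        rewrite (filter_ext (fun b => Rltb (INR (j' * hq + hq) / INR QQ) (load sigma p0 (A S) b))
                            (fun b => Rltb (INR (j' * hq + hq) / INR QQ) (load S (length S) (A S) b)))
          by (intros; rewrite Hload; auto).
        auto.
      - intros j' Hj'. destruct (kq_spec j' ltac:(lia)) as [_ H2].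
        assert (0 < INR j') by (apply lt_0_INR; lia).
        apply lt_INR in H2. rewrite mult_INR, plus_INR, mult_INR in H2.
        apply Rlt_le. apply Rmult_lt_reg_r with (INR j'); [lra|].
        replace ((INR Vn * INR H / INR j' + 1) * INR j') with (INR Vn * INR H + INR j') by (field; lra). lra.
      - unfold BB; apply Rabs_pos.
      - apply pos_INR.
      - unfold E0. pose proof (pos_INR Vn). apply Rmult_le_pos; [nra|lra]. }
  assert (Hjn : j = n0) by (unfold j, jsel; rewrite Ef; reflexivity).
  apply find_some in Ef. destruct Ef as [Hn0r Hviol].
  rewrite <- Hjn in Hviol, Hn0r.
  set (q := (j * hq)%nat).
  assert (Hj2 : (2 * q < QQ)%nat) by (unfold q, QQ; nia).
  destruct (kq_spec j ltac:(lia)) as [Hk1 Hk2]. fold k in Hk1, Hk2.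
  assert (Hl' : forall i, (p0 <= i < p0 + k)%nat -> item_size sigma i = 1 - INR q / INR QQ).
  { intros i Hi. rewrite Hl by auto. reflexivity. }
  assert (Hpk1 : packable_in sigma (p0 + k) k).
  { apply (pack_round sigma (p0 + k) mm QQ q k p0).
    - apply Hact; lia.
    - auto.
    - auto.
    - unfold p0; lia.
    - unfold q; nia.
    - unfold q, QQ; nia.
    - unfold q, mm. nia. }
  pose proof (comp_bound A c beta sigma (p0 + k) k Hcomp Hv ltac:(lia) Hpk1) as Hb1.
  destruct (Hcomp sigma Hv (p0 + k)%nat ltac:(lia)) as [Hf1 _].
  assert (Hb1' : INR (bins_used sigma (p0 + k) (alg_state A sigma (p0 + k))) <= (1 + a') * INR k + BB).
  { pose proof (Rle_abs (beta (num_items sigma))). pose proof (pos_INR k).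
    assert (Rmax c 0 * INR k <= (1 + a') * INR k) by (apply Rmult_le_compat_r; lra). lra. }
  pose proof (round_core sigma p0 k mm QQ q hq (A S) (alg_state A sigma (p0 + k)) Hv Hact0 (Hact k (le_n k))
                ltac:(unfold p0; lia) Hs Hl' QQ_pos Hj2 Hhq Hf1) as RC.
  unfold viol, Rltb in Hviol. destruct (Rlt_dec _ _) as [Hvl|] in Hviol; [|discriminate].
  rewrite (filter_ext (fun b => Rltb (INR (j * hq + hq) / INR QQ) (load S (length S) (A S) b))
                      (fun b => Rltb (INR (q + hq) / INR QQ) (load sigma p0 (A S) b))) in Hvl
    by (intros; rewrite Hload; auto).
  fold k in Hvl.
  set (C := length (filter (fun i => negb (Nat.eqb (alg_state A sigma (p0 + k) i) (A S i))) (seq 0 mm))) in *.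
  assert (HhqR : 1 <= INR hq) by (replace 1 with (INR 1) by (simpl; lra); apply le_INR; lia).
  assert (HC : E0 < INR C / INR hq) by lra.
  assert (HC' : E0 * INR hq < INR C).
  { apply Rmult_lt_compat_r with (r := INR hq) in HC; [|lra].
    replace (INR C / INR hq * INR hq) with (INR C) in HC by (field; lra). auto. }
  pose proof (changed_le A sigma p0 k (seq 0 mm) (seq_NoDup _ _)) as CL.
  rewrite Hst0 in CL. fold C in CL.
  assert (CL' : (C <= sumN (map (moves_at A sigma) (seq (Datatypes.S p0) k)))%nat).
  { apply CL. intros p Hp i Hi. split.
    - replace (p - 1)%nat with (p0 + (p - 1 - p0))%nat by lia. rewrite Hact by lia. apply in_or_app; auto.
    - assert (In i (active_items sigma p)).
      { replace p with (p0 + (p - p0))%nat by lia. rewrite Hact by lia. apply in_or_app; auto. }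
      unfold active_items in H0. apply filter_In in H0. tauto. }
  destruct (round_props S mm x k HvS HaS HmS Hx) as [_ [_ HlenS]].
  unfold step. fold j k x. rewrite HlenS. fold p0.
  replace (p0 + 2 * k)%nat with (p0 + (k + k))%nat by lia.
  rewrite moves_split, seq_app, map_app, sumN_app.
  rewrite !plus_INR.
  assert (0 <= INR (sumN (map (moves_at A sigma) (seq (Datatypes.S p0 + k) k)))) by apply pos_INR.
  apply le_INR in CL'. lra.
Qed.

Definition S0 : list update := repeat (Ins (1 / INR QQ)) mm.
Definition Sr (r : nat) : list update := Nat.iter r step S0.

Lemma S0_inv : Inv S0.
Proof.
  assert (Hx : 0 <= 1 / INR QQ <= 1).
  { pose proof QQ_pos. assert (1 <= INR QQ) by (replace 1 with (INR 1) by (simpl; lra); apply le_INR; lia).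
    split. apply Rlt_le, Rdiv_lt_0_compat; lra.
    apply Rmult_le_reg_r with (INR QQ); [lra|]. replace (1 / INR QQ * INR QQ) with 1 by (field; lra). lra. }
  destruct (ins_block [] (1 / INR QQ) mm valid_nil Hx) as [Hv Ha].
  unfold Inv, S0. simpl in Hv, Ha. split; auto. split; [rewrite Ha; reflexivity|]. split.
  - rewrite repeat_length; lia.
  - intros i Hi. apply nth_error_repeat; auto.
Qed.

Lemma Sr_inv r : Inv (Sr r).
Proof. induction r; simpl; [apply S0_inv|]. apply step_inv; auto. Qed.

Lemma Sr_S r : Sr (Datatypes.S r) = step (Sr r).
Proof. reflexivity. Qed.

Lemma Sr_prefix r d : exists T, Sr (r + d) = Sr r ++ T.
Proof.
  induction d as [|d [T HT]].
  - exists []. rewrite Nat.add_0_r, app_nil_r. reflexivity.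
  - replace (r + Datatypes.S d)%nat with (Datatypes.S (r + d)) by lia. rewrite Sr_S.
    unfold step, round_list. rewrite HT. eexists. rewrite <- app_assoc. reflexivity.
Qed.

Lemma Sr_len_items r : (length (Sr r) + mm = 2 * num_items (Sr r))%nat.
Proof.
  induction r.
  - simpl. unfold S0. rewrite repeat_length, num_items_repeat. lia.
  - rewrite Sr_S. unfold step. rewrite num_items_round. unfold round_list.
    rewrite !length_app, repeat_length, length_map, length_seq. lia.
Qed.

Lemma kq_mono j : (j0 <= j)%nat -> (kq j <= kq j0)%nat.
Proof.
  intros Hjj. destruct (kq_spec j ltac:(lia)) as [_ H2]. destruct (kq_spec j0 ltac:(lia)) as [H1 _].
  destruct (le_lt_dec (kq j) (kq j0)) as [|Hlt]; auto.
  assert ((kq j0 + 1) * j <= kq j * j)%nat by (apply Nat.mul_le_mono_r; lia).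
  assert (kq j0 * j0 <= kq j0 * j)%nat by (apply Nat.mul_le_mono_l; lia).
  nia.
Qed.

Lemma Sr_items r : (num_items (Sr r) <= mm + r * kq j0)%nat.
Proof.
  induction r.
  - simpl. unfold S0. rewrite num_items_repeat. lia.
  - rewrite Sr_S. unfold step. rewrite num_items_round.
    pose proof (kq_mono (jsel (Sr r)) ltac:(pose proof (jsel_range (Sr r)); lia)). lia.
Qed.

Definition sig (R : nat) : list update := Sr R ++ repeat (Ins 0) (n - num_items (Sr R)).

Lemma sig_valid R : valid_input (sig R).
Proof.
  destruct (Sr_inv R) as [Hv _]. destruct (ins_block (Sr R) 0 (n - num_items (Sr R)) Hv ltac:(lra)) as [H1 _].
  exact H1.
Qed.

Lemma sig_items R : (num_items (Sr R) <= n)%nat -> num_items (sig R) = n.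
Proof. intros. unfold sig. rewrite num_items_app, num_items_repeat. lia. Qed.

Lemma moves_rounds R : (num_items (Sr R) <= n)%nat ->
  forall r, (r <= R)%nat -> INR r * (E0 * INR hq) <= INR (moves A (sig R) (length (Sr r))).
Proof.
  intros HR r. induction r as [|r IH]; intros Hr.
  - simpl. rewrite Rmult_0_l. apply pos_INR.
  - destruct (Sr_prefix (Datatypes.S r) (R - Datatypes.S r)) as [T HT].
    replace (Datatypes.S r + (R - Datatypes.S r))%nat with R in HT by lia.
    assert (Hs : sig R = step (Sr r) ++ (T ++ repeat (Ins 0) (n - num_items (Sr R)))).
    { unfold sig. rewrite HT at 1. rewrite Sr_S, app_assoc. reflexivity. }
    pose proof (round_moves (Sr r) (T ++ repeat (Ins 0) (n - num_items (Sr R))) (Sr_inv r)) as RM.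
    rewrite <- Hs in RM. specialize (RM (sig_valid R) (sig_items R HR)).
    rewrite Sr_S. rewrite S_INR. specialize (IH ltac:(lia)). lra.
Qed.

Lemma adv_recourse R r0 : (num_items (Sr R) <= n)%nat -> (1 <= mm)%nat -> 0 <= r0 ->
  r0 * INR (2 * n) <= INR R * (E0 * INR hq) ->
  exists sigma, valid_input sigma /\ num_items sigma = n /\ recourse_at_least A sigma r0.
Proof.
  intros HR Hm Hr0 Hbig. exists (sig R). split; [apply sig_valid|split; [apply sig_items; auto|]].
  exists (length (Sr R)). pose proof (Sr_len_items R). destruct (Sr_inv R) as [_ [_ [HmS _]]].
  split.
  - split; [lia|]. unfold sig. rewrite length_app. lia.
  - pose proof (moves_rounds R HR R (le_n R)).
    assert (INR (length (Sr R)) <= INR (2 * n)) by (apply le_INR; lia).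
    assert (r0 * INR (length (Sr R)) <= r0 * INR (2 * n)) by (apply Rmult_le_compat_l; lra).
    lra.
Qed.
End Adv.

Lemma nat_floor x : 0 <= x -> exists k : nat, INR k <= x < INR k + 1.
Proof.
  intros Hx. destruct (archimed x) as [H1 H2].
  assert (Hz : (0 < up x)%Z) by (apply lt_IZR; lra).
  exists (Z.to_nat (up x - 1)).
  rewrite INR_IZR_INZ, Z2Nat.id by lia. rewrite minus_IZR. simpl. lra.
Qed.

Lemma Rpower_pos x y : 0 < Rpower x y.
Proof. unfold Rpower. apply exp_pos. Qed.

Lemma Rpower_base_le x y e : 0 < x -> x <= y -> 0 <= e -> Rpower x e <= Rpower y e.
Proof.
  intros Hx Hxy He. unfold Rpower.
  assert (ln x <= ln y) by (apply ln_le_mono; auto).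
  assert (e * ln x <= e * ln y) by (apply Rmult_le_compat_l; auto).
  destruct (Rle_lt_or_eq_dec _ _ H0) as [Hl|Hl]; [left; apply exp_increasing; auto|rewrite Hl; lra].
Qed.

Lemma Rpower_split x d : 0 < x -> Rpower x (1 - d) * Rpower x d = x.
Proof. intros Hx. rewrite <- Rpower_plus. replace (1 - d + d) with 1 by ring. apply Rpower_1; auto. Qed.

Lemma Rpower_le_self x d : 1 <= x -> d <= 1 -> Rpower x d <= x.
Proof. intros Hx Hd. rewrite <- (Rpower_1 x) at 2 by lra. apply Rle_Rpower; auto. Qed.

Lemma eventually_Rpower K y : 0 < y -> exists N : nat, forall n : nat, (N <= n)%nat -> K <= Rpower (INR n) y.
Proof.
  intros Hy. set (K1 := Rmax K 1). set (X := Rpower K1 (1 / y)).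
  assert (HK1 : 1 <= K1) by apply Rmax_r.
  assert (HX : 0 < X) by apply Rpower_pos.
  destruct (INR_unbounded X) as [N HN]. exists N. intros n Hn.
  apply le_INR in Hn.
  assert (Rpower X y <= Rpower (INR n) y) by (apply Rpower_base_le; lra).
  unfold X in H. rewrite Rpower_mult in H. replace (1 / y * y) with 1 in H by (field; lra).
  rewrite Rpower_1 in H by lra. pose proof (Rmax_l K 1). fold K1 in H0. lra.
Qed.

Lemma large_eps_case (astar eps delta : R) (A : algorithm) (beta : nat -> R) :
  0 < astar < 1 -> 2 * astar <= eps -> 0 < delta < 1 ->
  competitive A (1 + astar - eps) beta -> little_o beta (fun n => eps * Rpower (INR n) delta) ->
  exists N : nat, forall n : nat, (N <= n)%nat -> False.
Proof.
  intros Ha He Hd Hc Hlo.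
  destruct (Hlo (astar / (4 * eps)) ltac:(apply Rdiv_lt_0_compat; lra)) as [N1 HN1].
  exists (Nat.max N1 1). intros n Hn.
  specialize (HN1 n ltac:(lia)).
  set (sigma := repeat (Ins 1) n).
  destruct (ins_block [] 1 n valid_nil ltac:(lra)) as [Hv Ha']. simpl in Hv, Ha'. fold sigma in Hv, Ha'.
  assert (Hlen : length sigma = n) by apply repeat_length.
  assert (Hact : active_items sigma n = seq 0 n).
  { rewrite <- Hlen at 1. change (act sigma = seq 0 n). rewrite Ha'. reflexivity. }
  assert (Hs : forall i, (i < n)%nat -> item_size sigma i = 1 / INR 1).
  { intros i Hi. unfold item_size, sigma. rewrite nth_error_repeat by auto. simpl. field. }
  assert (Hni : num_items sigma = n) by apply num_items_repeat.
  assert (Hpk : packable_in sigma n n) by (apply (pack_small sigma n n 1 n); auto; lia).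
  pose proof (comp_bound A _ beta sigma n n Hc Hv ltac:(lia) Hpk) as Hb.
  destruct (Hc sigma Hv n ltac:(lia)) as [Hf _].
  pose proof (volume_le_bins sigma n (alg_state A sigma n) Hf) as Hvol.
  rewrite Hact, (sumR_const_eq _ _ 1) in Hvol.
  2:{ intros i Hi. apply in_seq in Hi. rewrite Hs by lia. simpl. field. }
  rewrite length_seq in Hvol. rewrite Hni in Hb.
  assert (Hmax : Rmax (1 + astar - eps) 0 <= 1 - astar) by (apply Rmax_lub; lra).
  assert (Hn1 : 1 <= INR n) by (replace 1 with (INR 1) by (simpl; lra); apply le_INR; lia).
  assert (Hpw : Rpower (INR n) delta <= INR n) by (apply Rpower_le_self; lra).
  assert (Hpp : 0 < Rpower (INR n) delta) by apply Rpower_pos.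
  rewrite (Rabs_right (eps * Rpower (INR n) delta)) in HN1.
  2:{ apply Rle_ge. apply Rmult_le_pos; lra. }
  assert (E : astar / (4 * eps) * (eps * Rpower (INR n) delta) = astar * Rpower (INR n) delta / 4) by (field; lra).
  rewrite E in HN1.
  pose proof (Rle_abs (beta n)).
  assert (Rmax (1 + astar - eps) 0 * INR n <= (1 - astar) * INR n) by (apply Rmult_le_compat_r; lra).
  assert (astar * Rpower (INR n) delta <= astar * INR n) by (apply Rmult_le_compat_l; lra).
  nra.
Qed.

Theorem theorem2p1 :
  forall w : R, is_LambertWm1 (- 2 / exp 3) w ->
  let alpha := 1 - 1 / (w + 1) in
  exists c : R, 0 < c /\
  forall (eps delta : R), 0 < eps -> 0 < delta < 1 / 2 ->
  forall (A : algorithm) (beta : nat -> R),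
    competitive A (alpha - eps) beta ->
    little_o beta (fun n => eps * Rpower (INR n) delta) ->
    exists N : nat, forall n : nat, (N <= n)%nat ->
      exists sigma : list update,
        valid_input sigma /\ num_items sigma = n /\
        recourse_at_least A sigma (c * eps ^ 2 * Rpower (INR n) (1 - delta)).
Proof.
  intros w Hw alpha.
  destruct (astar_facts w Hw) as [[Ha0 Ha1] HL].
  set (astar := -1 / (w + 1)) in *.
  assert (Hw1 : w + 1 <> 0).
  { intros Hz. unfold astar in Ha0. rewrite Hz in Ha0. unfold Rdiv in Ha0. rewrite Rinv_0 in Ha0. lra. }
  assert (Halpha : alpha = 1 + astar) by (unfold alpha, astar; field; auto).
  exists (astar / 10000000). split; [apply Rdiv_lt_0_compat; lra|].
  intros eps delta Heps Hdelta A beta Hcomp Hlo.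
  replace (alpha - eps) with (1 + astar - eps) in Hcomp by (rewrite Halpha; ring).
  destruct (Rlt_le_dec eps (2 * astar)) as [Hsmall|Hlarge].
  2:{ destruct (large_eps_case astar eps delta A beta ltac:(lra) Hlarge ltac:(lra) Hcomp Hlo) as [N HN].
      exists N. intros n Hn. exfalso. eapply HN; eauto. }
  set (e' := Rmin eps (astar / 2)).
  assert (He1 : 0 < e') by (apply Rmin_glb_lt; lra).
  assert (He2 : e' <= astar / 2) by apply Rmin_r.
  assert (He3 : e' <= eps) by apply Rmin_l.
  assert (He4 : eps <= 4 * e').
  { unfold e', Rmin. destruct (Rle_dec eps (astar / 2)); lra. }
  set (a' := astar - e').
  destruct (nat_floor (56 / e')) as [J [HJ1 HJ2]].
  { apply Rlt_le, Rdiv_lt_0_compat; lra. }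
  set (H := (2 * (J + 1))%nat).
  assert (HHr : INR H = 2 * INR J + 2) by (unfold H; rewrite mult_INR, plus_INR; simpl; lra).
  assert (HHlo : 112 / e' < INR H) by (rewrite HHr; unfold Rdiv in *; lra).
  assert (HHhi : INR H <= 114 / e').
  { rewrite HHr. assert (2 <= 1 / e') by (apply Rmult_le_reg_r with e'; [lra|];
      replace (1 / e' * e') with 1 by (field; lra); lra).
    unfold Rdiv in *. lra. }
  assert (Hinv : 2 / astar <= 1 / e').
  { apply Rmult_le_reg_r with (astar * e'); [nra|].
    replace (2 / astar * (astar * e')) with (2 * e') by (field; lra).
    replace (1 / e' * (astar * e')) with astar by (field; lra). lra. }
  assert (HHa : 224 / astar <= INR H).
  { assert (112 * (2 / astar) <= 112 * (1 / e')) by lra. unfold Rdiv in *. lra. }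
  assert (HHa' : 224 <= INR H * astar).
  { apply Rmult_le_reg_r with (/ astar); [apply Rinv_0_lt_compat; lra|].
    replace (INR H * astar * / astar) with (INR H) by (field; lra). unfold Rdiv in HHa. lra. }
  assert (Ha'1 : astar / 2 <= a' < astar) by (unfold a'; lra).
  destruct (nat_floor (INR H * a' / (1 + a'))) as [j0 [Hj0a Hj0b]].
  { apply Rlt_le, Rdiv_lt_0_compat; nra. }
  assert (Hx4 : INR H * astar / 4 <= INR H * a' / (1 + a')).
  { apply Rmult_le_reg_r with (4 * (1 + a')); [lra|].
    replace (INR H * a' / (1 + a') * (4 * (1 + a'))) with (4 * (INR H * a')) by (field; lra).
    replace (INR H * astar / 4 * (4 * (1 + a'))) with (INR H * astar * (1 + a')) by (field; lra).
    assert (INR H * astar * (1 + a') <= INR H * astar * 2) by (apply Rmult_le_compat_l; lra).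
    assert (INR H * astar <= 2 * (INR H * a')) by nra. lra. }
  assert (Hxh : INR H * a' / (1 + a') < INR H / 2).
  { apply Rmult_lt_reg_r with (2 * (1 + a')); [lra|].
    replace (INR H * a' / (1 + a') * (2 * (1 + a'))) with (2 * (INR H * a')) by (field; lra).
    replace (INR H / 2 * (2 * (1 + a'))) with (INR H * (1 + a')) by (field; lra).
    assert (0 < INR H) by lra. nra. }
  assert (Hj0R : INR H * astar / 8 <= INR j0) by lra.
  assert (Hj : (2 <= j0 <= J)%nat).
  { split.
    - apply INR_le. simpl. lra.
    - apply INR_le. assert (INR j0 < INR J + 1) by lra.
      assert (INR j0 < INR (J + 1)) by (rewrite plus_INR; simpl; lra). apply INR_lt in H1. apply le_INR. lia. }
  assert (Hu : 4 * (1 + a') <= INR H * a').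
  { assert (INR H * astar <= 2 * (INR H * a')) by nra. lra. }
  assert (Hh : 14 / INR H <= (astar - a') / 8).
  { replace (astar - a') with e' by (unfold a'; ring).
    apply Rmult_le_reg_r with (8 * INR H); [lra|].
    replace (14 / INR H * (8 * INR H)) with 112 by (field; lra).
    replace (e' / 8 * (8 * INR H)) with (e' * INR H) by (field; lra).
    apply Rmult_le_reg_r with (/ e'); [apply Rinv_0_lt_compat; lra|].
    replace (e' * INR H * / e') with (INR H) by (field; lra). unfold Rdiv in HHlo. lra. }
  assert (Hc : 1 + astar - eps <= 1 + a') by (unfold a'; lra).
  destruct (Hlo (1 / 128) ltac:(lra)) as [N1 HN1].
  destruct (eventually_Rpower (2 + 17 / e') delta ltac:(lra)) as [N2 HN2].
  destruct (eventually_Rpower (8 * INR H) (1 - delta) ltac:(lra)) as [N3 HN3].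
  exists (Nat.max N1 (Nat.max N2 (Nat.max N3 1))). intros n Hn.
  specialize (HN1 n ltac:(lia)). specialize (HN2 n ltac:(lia)). specialize (HN3 n ltac:(lia)).
  set (P := Rpower (INR n) delta) in *. set (Pc := Rpower (INR n) (1 - delta)) in *.
  assert (Hn1 : 1 <= INR n) by (replace 1 with (INR 1) by (simpl; lra); apply le_INR; lia).
  assert (HPP : Pc * P = INR n) by (apply Rpower_split; lra).
  assert (HPpos : 0 < P) by apply Rpower_pos.
  assert (HPcpos : 0 < Pc) by apply Rpower_pos.
  destruct (nat_floor P) as [Vn [HV1 HV2]]; [lra|].
  assert (HVn : (1 <= Vn)%nat).
  { assert (INR 0 < INR Vn).
    { simpl. assert (0 < 17 / e') by (apply Rdiv_lt_0_compat; lra). lra. }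
    apply INR_lt in H0. lia. }
  assert (HVR : 1 <= INR Vn) by (replace 1 with (INR 1) by (simpl; lra); apply le_INR; lia).
  assert (HVP : INR Vn <= P) by lra.
  assert (HVH : INR Vn * INR H <= INR n / 8).
  { assert (INR H <= Pc / 8) by lra.
    assert (INR Vn * INR H <= P * (Pc / 8)).
    { apply Rmult_le_compat; try lra; apply pos_INR. }
    rewrite <- HPP. lra. }
  set (D := (2 * Vn * H)%nat).
  assert (HDR : INR D = 2 * (INR Vn * INR H)) by (unfold D; rewrite !mult_INR; simpl; ring).
  assert (HVH1 : 1 <= INR Vn * INR H).
  { assert (1 <= INR H) by lra. replace 1 with (1 * 1) by ring. apply Rmult_le_compat; lra. }
  assert (HDn : (0 < D <= n)%nat).
  { split. unfold D; lia. apply INR_le. lra. }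
  set (hq := (n / D)%nat).
  assert (Hhq : (1 <= hq)%nat) by (apply Nat.div_str_pos; lia).
  pose proof (Nat.div_mod n D ltac:(lia)) as Hdm. pose proof (Nat.mod_upper_bound n D ltac:(lia)) as Hmd.
  fold hq in Hdm.
  set (mmv := mm Vn H hq).
  assert (Hmm : mmv = (Vn * H * hq)%nat) by reflexivity.
  assert (HmR : INR mmv = INR Vn * INR H * INR hq) by (rewrite Hmm, !mult_INR; ring).
  assert (Hmn : (2 * mmv <= n)%nat) by (rewrite Hmm; unfold D in Hdm; nia).
  assert (HmR2 : INR n < 2 * INR mmv + INR D).
  { assert (INR n < INR (2 * mmv + D)) by (apply lt_INR; rewrite Hmm; unfold D in *; nia).
    rewrite plus_INR, mult_INR in H0. simpl in H0. lra. }
  assert (Hmn2 : 2 * INR mmv <= INR n) by (replace (2 * INR mmv) with (INR (2 * mmv)) by (rewrite mult_INR; simpl; ring); apply le_INR; auto).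
  assert (Hm4 : INR n / 4 <= INR mmv) by lra.
  set (K := kq Vn H j0).
  destruct (kq_spec Vn H j0 ltac:(lia)) as [Hk1 Hk2]. fold K in Hk1, Hk2.
  assert (HK : (0 < K)%nat) by (destruct K; [nia|lia]).
  set (R := ((n - mmv) / K)%nat).
  pose proof (Nat.div_mod (n - mmv) K ltac:(lia)) as Hdm2. pose proof (Nat.mod_upper_bound (n - mmv) K ltac:(lia)) as Hmd2.
  fold R in Hdm2.
  assert (Hitems : (num_items (Sr A beta n astar a' Vn H J j0 hq R) <= n)%nat).
  { pose proof (Sr_items A beta n astar a' Vn H J j0 hq eq_refl Hj Hhq HVn R). fold K in H0.
    unfold mm in H0. fold mmv in H0. nia. }
  assert (Hfin : a' + 2 * BB beta n + E0 astar a' Vn < 3 * INR Vn * (astar - a') / 8).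
  { unfold BB, E0. replace (astar - a') with e' by (unfold a'; ring).
    rewrite (Rabs_right (eps * P)) in HN1 by (apply Rle_ge; apply Rmult_le_pos; lra).
    assert (eps * P <= 4 * e' * P) by (apply Rmult_le_compat_r; lra).
    assert (4 * e' * P <= 4 * e' * (2 * INR Vn)) by (apply Rmult_le_compat_l; lra).
    assert (8 < e' * INR Vn).
    { assert (e' * (1 + 17 / e') <= e' * INR Vn) by (apply Rmult_le_compat_l; lra).
      replace (e' * (1 + 17 / e')) with (e' + 17) in H2 by (field; lra). lra. }
    lra. }
  apply (adv_recourse A beta n (1 + astar - eps) astar a' Vn H J j0 hq Hcomp Hc eq_refl Hj Hj0a Hj0b
           ltac:(lra) ltac:(lra) Ha1 HL Hu Hh Hhq HVn Hfin R); auto.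
  - change (1 <= mmv)%nat. rewrite Hmm. nia.
  - apply Rmult_le_pos; [|lra]. apply Rmult_le_pos; [apply Rlt_le, Rdiv_lt_0_compat; lra|].
    apply pow_le; lra.
  - set (RR := INR R). set (KR := INR K). set (j0R := INR j0). set (VR := INR Vn). set (Hr := INR H).
    set (hR := INR hq). set (nR := INR n). set (mR := INR mmv).
    assert (Hj0pos : 0 < j0R) by (unfold j0R; lra).
    assert (HrPos : 0 < Hr) by (unfold Hr; apply lt_0_INR; unfold H; lia).
    assert (HKj : KR * j0R < 2 * (VR * Hr)).
    { assert (INR (K * j0) < INR (Vn * H + j0)) by (apply lt_INR; auto).
      rewrite mult_INR, plus_INR, mult_INR in H0. fold KR j0R VR Hr in H0.
      assert (j0R <= Hr) by (unfold j0R, Hr; apply le_INR; unfold H; lia).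
      assert (Hr <= VR * Hr) by (rewrite <- (Rmult_1_l Hr) at 1; apply Rmult_le_compat_r; unfold VR in *; lra).
      lra. }
    assert (HRK : nR / 2 < (RR + 1) * KR).
    { assert (E : INR (n - mmv) = KR * RR + INR ((n - mmv) mod K)).
      { rewrite Hdm2 at 1. rewrite plus_INR, mult_INR. reflexivity. }
      assert (INR ((n - mmv) mod K) < KR) by (apply lt_INR; auto).
      rewrite minus_INR in E by lia. fold nR mR in E. fold mR in Hmn2. fold nR in Hmn2. lra. }
    assert (HA : nR * j0R / 2 < (RR + 1) * (2 * (VR * Hr))).
    { assert (0 < RR + 1) by (pose proof (pos_INR R); unfold RR; lra).
      assert (nR / 2 * j0R < (RR + 1) * KR * j0R) by (apply Rmult_lt_compat_r; lra).
      assert ((RR + 1) * (KR * j0R) < (RR + 1) * (2 * (VR * Hr))) by (apply Rmult_lt_compat_l; lra).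
      replace (nR * j0R / 2) with (nR / 2 * j0R) by (field; lra).
      replace ((RR + 1) * KR * j0R) with ((RR + 1) * (KR * j0R)) in H1 by ring. lra. }
    assert (HA2 : Pc * j0R < (RR + 1) * 4 * Hr).
    { assert (0 < RR + 1) by (pose proof (pos_INR R); unfold RR; lra).
      assert (VR * ((RR + 1) * 4 * Hr) <= P * ((RR + 1) * 4 * Hr)) by (apply Rmult_le_compat_r; [apply Rmult_le_pos; [apply Rmult_le_pos|]; lra|unfold VR; lra]).
      assert (P * (Pc * j0R) < P * ((RR + 1) * 4 * Hr)).
      { replace (P * (Pc * j0R)) with (nR * j0R) by (assert (HPP2 : Pc * P = nR) by (unfold nR; exact HPP); rewrite <- HPP2; ring).
        assert (nR * j0R < (RR + 1) * 4 * (VR * Hr)) by lra.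
        replace (VR * ((RR + 1) * 4 * Hr)) with ((RR + 1) * 4 * (VR * Hr)) in H1 by ring. lra. }
      apply Rmult_lt_reg_l with P; lra. }
    assert (HA3 : Pc * astar / 32 < RR + 1).
    { assert (Pc * (Hr * astar / 8) <= Pc * j0R) by (apply Rmult_le_compat_l; unfold Hr, j0R; lra).
      assert (0 < Hr) by (unfold Hr; lra).
      apply Rmult_lt_reg_r with (4 * Hr); [lra|].
      replace (Pc * astar / 32 * (4 * Hr)) with (Pc * (Hr * astar / 8)) by (field; lra).
      replace ((RR + 1) * (4 * Hr)) with ((RR + 1) * 4 * Hr) by ring. lra. }
    assert (HA4 : Pc * astar / 64 <= RR).
    { assert (1792 <= Pc * astar).
      { assert (8 * Hr * astar <= Pc * astar) by (apply Rmult_le_compat_r; unfold Hr in *; lra).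
        assert (224 <= Hr * astar) by (unfold Hr; lra). lra. }
      lra. }
    set (E0h := E0 astar a' Vn * hR).
    assert (HE0 : E0h = VR * e' * hR / 8) by (unfold E0h, E0, VR; replace (astar - a') with e' by (unfold a'; ring); field).
    assert (HE0pos : 0 <= E0h).
    { rewrite HE0. assert (0 <= VR * e') by (apply Rmult_le_pos; unfold VR; lra).
      assert (0 <= hR) by apply pos_INR. unfold Rdiv. apply Rmult_le_pos; [apply Rmult_le_pos|]; lra. }
    assert (HB : nR * (e' * e') / 3648 <= E0h).
    { assert (HmR' : mR = VR * Hr * hR) by (unfold mR, VR, Hr, hR; exact HmR).
      assert (E0h * Hr = mR * e' / 8) by (rewrite HE0, HmR'; field).
      assert (Hm4' : nR / 4 <= mR) by (unfold nR, mR; lra).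
      assert (nR * e' / 32 <= E0h * Hr) by (rewrite H0; assert (nR / 4 * e' <= mR * e') by (apply Rmult_le_compat_r; lra); lra).
      assert (Hr * e' <= 114).
      { unfold Hr. apply Rmult_le_reg_r with (/ e'); [apply Rinv_0_lt_compat; lra|].
        replace (INR H * e' * / e') with (INR H) by (field; lra). unfold Rdiv in HHhi. lra. }
      assert (E0h * (Hr * e') <= E0h * 114) by (apply Rmult_le_compat_l; lra).
      assert (nR * e' / 32 * e' <= E0h * Hr * e') by (apply Rmult_le_compat_r; lra).
      replace (E0h * Hr * e') with (E0h * (Hr * e')) in H4 by ring.
      replace (nR * (e' * e') / 3648) with (nR * e' / 32 * e' / 114) by (field; lra). lra. }
    assert (HC : Pc * astar / 64 * (nR * (e' * e') / 3648) <= RR * E0h).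
    { apply Rmult_le_compat; try lra.
      - apply Rmult_le_pos; [apply Rmult_le_pos|]; lra.
      - assert (0 <= nR) by (unfold nR; lra). assert (0 <= e' * e') by nra.
        unfold Rdiv. apply Rmult_le_pos; [apply Rmult_le_pos|]; lra. }
    assert (HD : eps ^ 2 <= 16 * (e' * e')) by (simpl; nra).
    replace (INR (2 * n)) with (2 * nR) by (unfold nR; rewrite mult_INR; simpl; ring).
    fold E0h.
    assert (HX : 0 <= astar * Pc * nR).
    { apply Rmult_le_pos; [apply Rmult_le_pos|]; unfold nR; lra. }
    assert (astar / 10000000 * eps ^ 2 * Pc * (2 * nR) = (eps ^ 2) * (astar * Pc * nR) / 5000000) by field.
    assert (Pc * astar / 64 * (nR * (e' * e') / 3648) = (e' * e') * (astar * Pc * nR) / 233472) by field.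
    assert (eps ^ 2 * (astar * Pc * nR) <= 16 * (e' * e') * (astar * Pc * nR)) by (apply Rmult_le_compat_r; lra).
    assert (0 <= (e' * e') * (astar * Pc * nR)) by (apply Rmult_le_pos; nra).
    lra.
Qed.
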